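(* Let $p$ be a prime and let $A\in\mathrm{GL}_2(\mathbb{Z}[1/p])$ be conjugate in $\mathrm{GL}_2(\mathbb{Z}[1/p])$ to $\mathrm{diag}(p,1/p)$. Then the group $G_p=(\mathbb{Z}[1/p])^2\rtimes_A\mathbb{Z}$ acts geometrically (properly discontinuously and coboundedly) on the horocyclic product $\mathbb{H}^2_p[p]\bowtie\mathbb{H}^2_p[p]$ of two mixed millefeuille spaces.
   Context: $\mathbb{H}^2_p$ is the Heintze group $\mathbb{R}\rtimes_{p^t}\mathbb{R}$ with the left-invariant Riemannian metric that is Euclidean at the origin (a hyperbolic plane of curvature $-(\ln p)^2$), with Busemann function $\beta(x,t)=-t$. $T_p$ is the $(p+1)$-regular tree with a Busemann function about a fixed end. The millefeuille space is $\mathbb{H}^2_p[p]=\{(x,v)\in\mathbb{H}^2_p\times T_p:\beta(x)=\beta_T(v)\}$ (it is a proper $\mathrm{CAT}(-\kappa)$ space with a distinguished boundary point and Busemann function). For two such spaces with Busemann functions $\beta_1,\beta_2$, the horocyclic product is $\{(x,y):\beta_1(x)=-\beta_2(y)\}$, with the path metric induced by an admissible monotone norm on the pair of coordinate distances. *)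

(* Defs.v *)
From Stdlib Require Import Reals Lra ZArith Znumtheory List Sorted.
From Coquelicot Require Import Rbar Lub.
Open Scope R_scope.

Definition in_Zinvp (p : Z) (x : R) : Prop :=
  exists (z : Z) (k : nat), x = IZR z / (IZR p) ^ k.

Definition in_pkZ (p k : Z) (x : R) : Prop :=
  exists z : Z, x = IZR z * powerRZ (IZR p) k.

Record mat2 := Mat2 { m11 : R; m12 : R; m21 : R; m22 : R }.

Definition mmul (A B : mat2) : mat2 :=
  Mat2 (m11 A * m11 B + m12 A * m21 B) (m11 A * m12 B + m12 A * m22 B)
       (m21 A * m11 B + m22 A * m21 B) (m21 A * m12 B + m22 A * m22 B).
Definition mdet (A : mat2) : R := m11 A * m22 A - m12 A * m21 A.
Definition mid : mat2 := Mat2 1 0 0 1.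
Definition minv (A : mat2) : mat2 :=
  Mat2 (m22 A / mdet A) (- m12 A / mdet A) (- m21 A / mdet A) (m11 A / mdet A).
Definition mapply (A : mat2) (v : R * R) : R * R :=
  (m11 A * fst v + m12 A * snd v, m21 A * fst v + m22 A * snd v).

Fixpoint mpow_nat (A : mat2) (n : nat) : mat2 :=
  match n with O => mid | S n' => mmul A (mpow_nat A n') end.
Definition mpowZ (A : mat2) (n : Z) : mat2 :=
  match n with
  | Z0 => mid
  | Zpos k => mpow_nat A (Pos.to_nat k)
  | Zneg k => mpow_nat (minv A) (Pos.to_nat k)
  end.

Definition in_GL2_Zinvp (p : Z) (A : mat2) : Prop :=
  in_Zinvp p (m11 A) /\ in_Zinvp p (m12 A) /\ in_Zinvp p (m21 A) /\
  in_Zinvp p (m22 A) /\ mdet A <> 0 /\ in_Zinvp p (/ mdet A).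

Definition diag_p (p : Z) : mat2 := Mat2 (IZR p) 0 0 (/ IZR p).

Definition conj_to_diag_p (p : Z) (A : mat2) : Prop :=
  exists P, in_GL2_Zinvp p P /\ A = mmul (mmul P (diag_p p)) (minv P).

Definition Gp_elt : Type := ((R * R) * Z)%type.
Definition in_Gp (p : Z) (g : Gp_elt) : Prop :=
  in_Zinvp p (fst (fst g)) /\ in_Zinvp p (snd (fst g)).
Definition Gp_mul (A : mat2) (g h : Gp_elt) : Gp_elt :=
  let w := mapply (mpowZ A (snd g)) (fst h) in
  ((fst (fst g) + fst w, snd (fst g) + snd w), (snd g + snd h)%Z).
Definition Gp_one : Gp_elt := ((0, 0), 0%Z).

Fixpoint chain_sum {T} (c : T -> T -> R) (g : R -> T) (l : list R) : R :=
  match l with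
  | t :: ((t' :: _) as rest) => c (g t) (g t') + chain_sum c g rest
  | _ => 0
  end.

Definition path_length_le {T} (c : T -> T -> R) (g : R -> T) (L : R) : Prop :=
  forall l : list R, Sorted Rle l -> Forall (fun t => 0 <= t <= 1) l ->
    chain_sum c g l <= L.

Definition cont01 {T} (d : T -> T -> R) (g : R -> T) : Prop :=
  forall s, 0 <= s <= 1 -> forall eps, 0 < eps -> exists delta, 0 < delta /\
    forall s', 0 <= s' <= 1 -> Rabs (s' - s) < delta -> d (g s) (g s') < eps.

Definition path_dist {T} (Sp : T -> Prop) (cont : (R -> T) -> Prop)
    (c : T -> T -> R) (a b : T) : R :=
  real (Glb_Rbar (fun L => exists g : R -> T,
     g 0 = a /\ g 1 = b /\ (forall s, 0 <= s <= 1 -> Sp (g s)) /\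
     cont g /\ path_length_le c g L)).

(* H^2_p = R x|_{p^t} R with the left-invariant metric Euclidean at   *)
(* the origin, i.e. ds^2 = p^{-2t} dx^2 + dt^2 (curvature -(ln p)^2). *)
Definition arcosh (z : R) : R := ln (z + sqrt (z * z - 1)).

Definition H2_pt : Type := (R * R)%type.  (* (x, t) *)
Definition H2_dist (p : Z) (a b : H2_pt) : R :=
  let u := ln (IZR p) in
  let Ya := Rpower (IZR p) (snd a) in
  let Yb := Rpower (IZR p) (snd b) in
  / u * arcosh (1 + (u ^ 2 * (fst a - fst b) ^ 2 + (Ya - Yb) ^ 2) / (2 * Ya * Yb)).
Definition H2_beta (a : H2_pt) : R := - snd a.

(* T_p : geometric realization of the (p+1)-regular tree, with a      *)
(* Busemann function about a fixed end.                               *)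
(* Vertices at height n in Z are the classes of Z[1/p] modulo p^n Z;  *)
(* the parent of (n, r) is (n-1, r mod p^(n-1) Z) (so each vertex has *)
(* one parent and p children).  A point of the realization is a pair  *)
(* (h, r) with h real and r in Z[1/p]; it lies on the edge from the   *)
(* vertex (ceil h, r) towards its parent, at height h.  Representatives*)
(* (h,r),(h,r') with r - r' in p^(ceil h) Z are the same point (they  *)
(* are at tree distance 0).  Busemann function: beta_T (h, r) = h,    *)
(* decreasing towards the fixed end.                                  *)
Definition Tree_pt : Type := (R * R)%type.
Definition in_Tree (p : Z) (v : Tree_pt) : Prop := in_Zinvp p (snd v).
Definition Tree_beta (v : Tree_pt) : R := fst v.

(* height of the confluence point of the rays from v and w to the end *)
Definition Tree_meet (p : Z) (v w : Tree_pt) : R :=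
  real (Lub_Rbar (fun g => g <= fst v /\ g <= fst w /\
          exists k : Z, g <= IZR k /\ in_pkZ p k (snd v - snd w))).
Definition Tree_dist (p : Z) (v w : Tree_pt) : R :=
  fst v + fst w - 2 * Tree_meet p v w.

(* Millefeuille space H^2_p[p] = {(x,v) : beta(x) = beta_T(v)} with   *)
(* its length metric: a continuous path (x(s), v(s)) has the length   *)
(* of its H^2_p-component x(s) (each leaf is isometric to H^2_p).     *)
Definition MF_pt : Type := (H2_pt * Tree_pt)%type.
Definition in_MF (p : Z) (a : MF_pt) : Prop :=
  in_Tree p (snd a) /\ H2_beta (fst a) = Tree_beta (snd a).
Definition MF_beta (a : MF_pt) : R := H2_beta (fst a).
Definition MF_cont (p : Z) (g : R -> MF_pt) : Prop :=
  cont01 (H2_dist p) (fun s => fst (g s)) /\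
  cont01 (Tree_dist p) (fun s => snd (g s)).
Definition MF_dist (p : Z) (a b : MF_pt) : R :=
  path_dist (in_MF p) (MF_cont p) (fun x y => H2_dist p (fst x) (fst y)) a b.

Definition is_norm2 (N : R -> R -> R) : Prop :=
  (forall a b, 0 <= N a b) /\
  (forall a b, N a b = 0 -> a = 0 /\ b = 0) /\
  (forall l a b, N (l * a) (l * b) = Rabs l * N a b) /\
  (forall a b a' b', N (a + a') (b + b') <= N a b + N a' b').
Definition monotone_norm2 (N : R -> R -> R) : Prop :=
  is_norm2 N /\
  forall a b a' b', 0 <= a <= a' -> 0 <= b <= b' -> N a b <= N a' b'.

Definition HP_pt : Type := (MF_pt * MF_pt)%type.
Definition in_HP (p : Z) (z : HP_pt) : Prop :=
  in_MF p (fst z) /\ in_MF p (snd z) /\ MF_beta (fst z) = - MF_beta (snd z).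
Definition HP_cont (p : Z) (g : R -> HP_pt) : Prop :=
  cont01 (MF_dist p) (fun s => fst (g s)) /\
  cont01 (MF_dist p) (fun s => snd (g s)).
Definition HP_dist (p : Z) (N : R -> R -> R) (z w : HP_pt) : R :=
  path_dist (in_HP p) (HP_cont p)
    (fun x y => N (MF_dist p (fst x) (fst y)) (MF_dist p (snd x) (snd y))) z w.

(* Geometric (isometric, properly discontinuous, cobounded) action of *)
(* a group (carrier predicate inG, product mul, unit e) on a          *)
(* (pseudo)metric space (carrier predicate inX, distance d).  Points  *)
(* at distance 0 are identified, so the action laws are required up  *)
(* to distance 0.                                                     *)
Definition geometric_action {G X : Type} (inG : G -> Prop) (mul : G -> G -> G)
    (e : G) (inX : X -> Prop) (d : X -> X -> R) (act : G -> X -> X) : Prop :=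
  (forall g x, inG g -> inX x -> inX (act g x)) /\
  (forall x, inX x -> d (act e x) x = 0) /\
  (forall g h x, inG g -> inG h -> inX x ->
      d (act (mul g h) x) (act g (act h x)) = 0) /\
  (forall g x y, inG g -> inX x -> inX y -> d (act g x) (act g y) = d x y) /\
  (* properly discontinuous: for each ball B, finitely many g with gB meeting B *)
  (forall x r, inX x -> exists lg : list G, forall g, inG g ->
      (exists y, inX y /\ d x y <= r /\ d x (act g y) <= r) -> In g lg) /\
  (exists x0 R0, inX x0 /\ forall y, inX y -> exists g, inG g /\ d y (act g x0) <= R0).

(* Main.v *)
Require Import Defs.
From Stdlib Require Import Reals Lra Lia ZArith Znumtheory List Sorted Classical.
From Coquelicot Require Import Rbar Lub.
Open Scope R_scope.

Lemma pR_gt1 (p : Z) : prime p -> 1 < IZR p.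
Proof. intro H. apply prime_ge_2 in H. apply IZR_le in H. lra. Qed.

Lemma pR_pos (p : Z) : prime p -> 0 < IZR p.
Proof. intro H. pose proof (pR_gt1 p H). lra. Qed.

Lemma pR_neq0 (p : Z) : prime p -> IZR p <> 0.
Proof. intro H. pose proof (pR_gt1 p H). lra. Qed.

Lemma powerRZ_pos' (p : Z) (k : Z) : prime p -> 0 < powerRZ (IZR p) k.
Proof. intro H. apply powerRZ_lt. apply pR_pos; auto. Qed.

Lemma IZR_powZ (p j : Z) : (0 <= j)%Z -> IZR (p ^ j) = powerRZ (IZR p) j.
Proof.
  intro Hj. rewrite <- (Z2Nat.id j Hj). rewrite <- pow_IZR.
  rewrite pow_powerRZ. reflexivity.
Qed.

Lemma pk_0 p k : in_pkZ p k 0.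
Proof. exists 0%Z. simpl. ring. Qed.

Lemma pk_add p k x y : in_pkZ p k x -> in_pkZ p k y -> in_pkZ p k (x + y).
Proof. intros [a Ha] [b Hb]. exists (a + b)%Z. rewrite plus_IZR. subst. ring. Qed.

Lemma pk_opp p k x : in_pkZ p k x -> in_pkZ p k (- x).
Proof. intros [a Ha]. exists (- a)%Z. rewrite opp_IZR. subst. ring. Qed.

Lemma pk_sub p k x y : in_pkZ p k x -> in_pkZ p k y -> in_pkZ p k (x - y).
Proof. intros. unfold Rminus. apply pk_add; auto. apply pk_opp; auto. Qed.

Lemma pk_mono p k k' x : prime p -> (k <= k')%Z -> in_pkZ p k' x -> in_pkZ p k x.
Proof.
  intros Hp Hk [a Ha]. exists (a * p ^ (k' - k))%Z.
  rewrite mult_IZR, IZR_powZ by lia. subst.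
  rewrite Rmult_assoc, <- powerRZ_add by (apply pR_neq0; auto).
  f_equal. f_equal. lia.
Qed.

Lemma pk_scale p k m x : prime p -> in_pkZ p k x ->
  in_pkZ p (k + m) (powerRZ (IZR p) m * x).
Proof.
  intros Hp [a Ha]. exists a. subst.
  rewrite powerRZ_add by (apply pR_neq0; auto). ring.
Qed.

Lemma pk_mul p k m x y : prime p -> in_pkZ p k x -> in_pkZ p m y ->
  in_pkZ p (k + m) (x * y).
Proof.
  intros Hp [a Ha] [b Hb]. exists (a * b)%Z. subst. rewrite mult_IZR.
  rewrite powerRZ_add by (apply pR_neq0; auto). ring.
Qed.

Lemma pk_pow p k : in_pkZ p k (powerRZ (IZR p) k).
Proof. exists 1%Z. simpl. ring. Qed.

Lemma pk_IZR p z : in_pkZ p 0 (IZR z).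
Proof. exists z. simpl. ring. Qed.

Lemma Zinvp_pk p x : prime p -> in_Zinvp p x <-> exists k, in_pkZ p k x.
Proof.
  intro Hp. split.
  - intros [z [k H]]. exists (- Z.of_nat k)%Z. exists z. rewrite H.
    rewrite powerRZ_neg' by (apply pR_neq0; auto).
    rewrite <- pow_powerRZ. unfold Rdiv. ring.
  - intros [k [a Ha]]. destruct (Z_le_gt_dec 0 k) as [Hk|Hk].
    + exists (a * p ^ k)%Z, O. rewrite mult_IZR, IZR_powZ by lia. subst. simpl. field.
    + exists a, (Z.to_nat (- k)). subst.
      replace k with (- Z.of_nat (Z.to_nat (- k)))%Z at 1 by lia.
      rewrite powerRZ_neg' by (apply pR_neq0; auto). rewrite <- pow_powerRZ.
      unfold Rdiv. ring.
Qed.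

Definition pset {T} (Sp : T -> Prop) (cont : (R -> T) -> Prop)
    (c : T -> T -> R) (a b : T) : R -> Prop :=
  fun L => exists g : R -> T,
     g 0 = a /\ g 1 = b /\ (forall s, 0 <= s <= 1 -> Sp (g s)) /\
     cont g /\ path_length_le c g L.

Lemma pd_unfold {T} Sp cont (c : T -> T -> R) a b :
  path_dist Sp cont c a b = real (Glb_Rbar (pset Sp cont c a b)).
Proof. reflexivity. Qed.

Lemma pset_nonneg {T} Sp cont (c : T -> T -> R) a b L :
  pset Sp cont c a b L -> 0 <= L.
Proof.
  intros [g [_ [_ [_ [_ H]]]]]. apply (H nil); constructor.
Qed.

Lemma glb_fin {T} Sp cont (c : T -> T -> R) a b L :
  pset Sp cont c a b L -> Glb_Rbar (pset Sp cont c a b) = Finite (path_dist Sp cont c a b).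
Proof.
  intro HL. rewrite pd_unfold.
  destruct (Glb_Rbar_correct (pset Sp cont c a b)) as [Hlb Hg].
  assert (H0 : Rbar_le 0 (Glb_Rbar (pset Sp cont c a b))).
  { apply Hg. intros x Hx. simpl. eapply pset_nonneg; eauto. }
  assert (H1 : Rbar_le (Glb_Rbar (pset Sp cont c a b)) L) by (apply Hlb; auto).
  destruct (Glb_Rbar (pset Sp cont c a b)); simpl in *; auto; contradiction.
Qed.

Lemma pd_le {T} Sp cont (c : T -> T -> R) a b L :
  pset Sp cont c a b L -> path_dist Sp cont c a b <= L.
Proof.
  intro HL. pose proof (glb_fin _ _ _ _ _ _ HL) as E.
  destruct (Glb_Rbar_correct (pset Sp cont c a b)) as [Hlb _].
  specialize (Hlb L HL). rewrite E in Hlb. exact Hlb.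
Qed.

Lemma pd_nonneg {T} Sp cont (c : T -> T -> R) a b : 0 <= path_dist Sp cont c a b.
Proof.
  rewrite pd_unfold.
  destruct (Glb_Rbar_correct (pset Sp cont c a b)) as [Hlb Hg].
  assert (H0 : Rbar_le 0 (Glb_Rbar (pset Sp cont c a b))).
  { apply Hg. intros x Hx. simpl. eapply pset_nonneg; eauto. }
  destruct (Glb_Rbar (pset Sp cont c a b)); simpl in *; lra.
Qed.

Lemma pd_ge {T} Sp cont (c : T -> T -> R) a b B :
  (exists L, pset Sp cont c a b L) ->
  (forall L, pset Sp cont c a b L -> B <= L) -> B <= path_dist Sp cont c a b.
Proof.
  intros [L0 HL0] H. pose proof (glb_fin _ _ _ _ _ _ HL0) as E.
  destruct (Glb_Rbar_correct (pset Sp cont c a b)) as [_ Hg].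
  assert (Rbar_le B (Glb_Rbar (pset Sp cont c a b))).
  { apply Hg. intros x Hx. simpl. apply H; auto. }
  rewrite E in H0. exact H0.
Qed.

Lemma pd_approx {T} Sp cont (c : T -> T -> R) a b eps :
  (exists L, pset Sp cont c a b L) -> 0 < eps ->
  exists L, pset Sp cont c a b L /\ L < path_dist Sp cont c a b + eps.
Proof.
  intros Hne He. destruct (Classical_Prop.classic
     (exists L, pset Sp cont c a b L /\ L < path_dist Sp cont c a b + eps)) as [H|H]; auto.
  exfalso.
  assert (path_dist Sp cont c a b + eps <= path_dist Sp cont c a b).
  { apply pd_ge; auto. intros L HL. destruct (Rlt_le_dec L (path_dist Sp cont c a b + eps)); auto.
    exfalso; apply H; eauto. }
  lra.
Qed.

Lemma pd_same {T} Sp cont (c : T -> T -> R) a :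
  Sp a -> cont (fun _ => a) -> c a a = 0 -> path_dist Sp cont c a a = 0.
Proof.
  intros Ha Hc Hcc. apply Rle_antisym; [|apply pd_nonneg].
  apply pd_le. exists (fun _ => a). repeat split; auto.
  intros l _ _. induction l as [|x l IH]; simpl; [lra|].
  destruct l; [lra|]. rewrite Hcc. lra.
Qed.

Lemma chain_lip {T} (c : T -> T -> R) (g : R -> T) K :
  0 <= K ->
  (forall a b, 0 <= a <= 1 -> 0 <= b <= 1 -> c (g a) (g b) <= K * Rabs (b - a)) ->
  forall l, Sorted Rle l -> Forall (fun t => 0 <= t <= 1) l -> chain_sum c g l <= K.
Proof.
  intros HK Hc.
  assert (Hgen : forall l a, Sorted Rle (a :: l) -> Forall (fun t => 0 <= t <= 1) (a :: l) ->
            chain_sum c g (a :: l) <= K * (1 - a)).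
  { induction l as [|b l IH]; intros a Hs Hf.
    - simpl. inversion Hf; subst. apply Rmult_le_pos; lra.
    - change (chain_sum c g (a :: b :: l)) with (c (g a) (g b) + chain_sum c g (b :: l)).
      pose proof (Sorted_inv Hs) as [Hs1 Hs2].
      apply HdRel_inv in Hs2.
      pose proof (Forall_inv Hf) as Ha. pose proof (Forall_inv_tail Hf) as Hf1.
      pose proof (Forall_inv Hf1) as Hb.
      pose proof (IH b Hs1 Hf1) as Hi.
      pose proof (Hc a b Ha Hb) as Hab. rewrite Rabs_right in Hab by lra.
      nra. }
  intros l Hs Hf. destruct l as [|a l]; simpl; [lra|].
  pose proof (Hgen l a Hs Hf). pose proof (Forall_inv Hf). simpl in *. nra.
Qed.

Lemma chain_01 {T} (c : T -> T -> R) g L :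
  path_length_le c g L -> c (g 0) (g 1) <= L.
Proof.
  intro H. specialize (H (0 :: 1 :: nil)).
  simpl in H. assert (c (g 0) (g 1) + 0 <= L); [|lra].
  apply H.
  - repeat constructor. lra.
  - repeat (apply Forall_cons; [lra|]); apply Forall_nil.
Qed.

Lemma chain_0s1 {T} (c : T -> T -> R) g L s :
  0 <= s <= 1 -> path_length_le c g L -> c (g 0) (g s) + c (g s) (g 1) <= L.
Proof.
  intros Hs H. specialize (H (0 :: s :: 1 :: nil)).
  simpl in H. assert (c (g 0) (g s) + (c (g s) (g 1) + 0) <= L); [|lra].
  apply H.
  - apply Sorted_cons; [apply Sorted_cons; [apply Sorted_cons; constructor | constructor; lra] | constructor; lra].
  - repeat (apply Forall_cons; [lra|]); apply Forall_nil.
Qed.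

Lemma chain_map {T} (c : T -> T -> R) Sp (f : T -> T) g :
  (forall x y, Sp x -> Sp y -> c (f x) (f y) = c x y) ->
  (forall s, 0 <= s <= 1 -> Sp (g s)) ->
  forall l, Forall (fun t => 0 <= t <= 1) l ->
  chain_sum c (fun s => f (g s)) l = chain_sum c g l.
Proof.
  intros Hc Hg. induction l as [|a l IH]; intro Hf; simpl; auto.
  destruct l as [|b l]; auto.
  pose proof (Forall_inv Hf) as Ha. pose proof (Forall_inv_tail Hf) as Hf1.
  pose proof (Forall_inv Hf1) as Hb.
  rewrite Hc by auto. f_equal. apply IH; auto.
Qed.

Lemma pset_map {T} Sp cont (c : T -> T -> R) (f : T -> T) a b L :
  (forall x, Sp x -> Sp (f x)) ->
  (forall x y, Sp x -> Sp y -> c (f x) (f y) = c x y) ->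
  (forall g, (forall s, 0 <= s <= 1 -> Sp (g s)) -> cont g -> cont (fun s => f (g s))) ->
  pset Sp cont c a b L -> pset Sp cont c (f a) (f b) L.
Proof.
  intros HS Hc Hcont [g [H0 [H1 [Hs [Hg Hl]]]]].
  exists (fun s => f (g s)). repeat split.
  - rewrite H0; auto.
  - rewrite H1; auto.
  - intros s Hs'. apply HS; auto.
  - apply Hcont; auto.
  - intros l Hsl Hfl. rewrite (chain_map c Sp f g Hc Hs l Hfl). apply Hl; auto.
Qed.

Lemma pd_transport {T} Sp cont (c : T -> T -> R) (f f' : T -> T) a b :
  (forall x, f' (f x) = x) ->
  (forall x, Sp x -> Sp (f x)) ->
  (forall x y, Sp x -> Sp y -> c (f x) (f y) = c x y) ->
  (forall g, (forall s, 0 <= s <= 1 -> Sp (g s)) -> cont g -> cont (fun s => f (g s))) ->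
  (forall x, Sp x -> Sp (f' x)) ->
  (forall x y, Sp x -> Sp y -> c (f' x) (f' y) = c x y) ->
  (forall g, (forall s, 0 <= s <= 1 -> Sp (g s)) -> cont g -> cont (fun s => f' (g s))) ->
  path_dist Sp cont c (f a) (f b) = path_dist Sp cont c a b.
Proof.
  intros Hff HS Hc Hcont HS' Hc' Hcont'.
  rewrite !pd_unfold. f_equal. apply Glb_Rbar_eqset. intro L. split; intro H.
  - rewrite <- (Hff a), <- (Hff b). apply pset_map; auto.
  - apply pset_map; auto.
Qed.

Lemma ln_le' x y : 0 < x -> x <= y -> ln x <= ln y.
Proof. intros Hx Hxy. destruct (Req_dec x y) as [->|H]; [lra|].
  left. apply ln_increasing; lra. Qed.

Lemma exp_le' x y : x <= y -> exp x <= exp y.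
Proof. intros H. destruct (Req_dec x y) as [->|H']; [lra|].
  left. apply exp_increasing; lra. Qed.

Lemma ln_le_xm1 x : 0 < x -> ln x <= x - 1.
Proof. intro H. pose proof (exp_ineq1_le (ln x)). rewrite exp_ln in H0; lra. Qed.

Lemma ln_nonneg x : 1 <= x -> 0 <= ln x.
Proof. intro H. rewrite <- ln_1. apply ln_le'; lra. Qed.

Lemma sqrt_add_le a b : 0 <= a -> 0 <= b -> sqrt (a + b) <= sqrt a + sqrt b.
Proof.
  intros Ha Hb.
  rewrite <- (sqrt_square (sqrt a + sqrt b)) by (pose proof (sqrt_pos a); pose proof (sqrt_pos b); lra).
  apply sqrt_le_1_alt.
  pose proof (sqrt_sqrt a Ha). pose proof (sqrt_sqrt b Hb).
  pose proof (sqrt_pos a). pose proof (sqrt_pos b). nra.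
Qed.

Definition uu (p : Z) := ln (IZR p).
Definition YY (p : Z) (t : R) := Rpower (IZR p) t.

Lemma uu_pos p : prime p -> 0 < uu p.
Proof. intro H. unfold uu. rewrite <- ln_1. apply ln_increasing; [lra|]. apply pR_gt1; auto. Qed.

Lemma YY_pos p t : 0 < YY p t.
Proof. unfold YY, Rpower. apply exp_pos. Qed.

Lemma YY_exp p t : YY p t = exp (t * uu p).
Proof. reflexivity. Qed.

Definition ww (p : Z) (a b : H2_pt) : R :=
  (uu p ^ 2 * (fst a - fst b) ^ 2 + (YY p (snd a) - YY p (snd b)) ^ 2) /
  (2 * YY p (snd a) * YY p (snd b)).

Lemma ww_nonneg p a b : 0 <= ww p a b.
Proof.
  unfold ww. pose proof (YY_pos p (snd a)). pose proof (YY_pos p (snd b)).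
  pose proof (pow2_ge_0 (uu p)). pose proof (pow2_ge_0 (fst a - fst b)).
  pose proof (pow2_ge_0 (YY p (snd a) - YY p (snd b))).
  apply Rmult_le_pos.
  - nra.
  - left. apply Rinv_0_lt_compat. nra.
Qed.

Lemma H2_dist_ww p a b : H2_dist p a b = / uu p * arcosh (1 + ww p a b).
Proof. reflexivity. Qed.

Lemma arcosh_lower z : 1 <= z -> ln z <= arcosh z.
Proof.
  intro H. unfold arcosh. apply ln_le'; [lra|]. pose proof (sqrt_pos (z*z-1)); lra.
Qed.

Lemma arcosh_upper w : 0 <= w -> arcosh (1 + w) <= 2 * w + sqrt (2 * w).
Proof.
  intro H. unfold arcosh.
  assert (Hs : 0 <= sqrt ((1 + w) * (1 + w) - 1)) by apply sqrt_pos.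
  eapply Rle_trans; [apply ln_le_xm1; lra|].
  assert (sqrt ((1 + w) * (1 + w) - 1) <= w + sqrt (2 * w)); [|lra].
  replace ((1 + w) * (1 + w) - 1) with (w * w + 2 * w) by ring.
  eapply Rle_trans; [apply sqrt_add_le; nra|]. rewrite sqrt_square by lra. lra.
Qed.

Lemma H2_nonneg p a b : prime p -> 0 <= H2_dist p a b.
Proof.
  intro Hp. rewrite H2_dist_ww. pose proof (ww_nonneg p a b).
  apply Rmult_le_pos. left; apply Rinv_0_lt_compat, uu_pos; auto.
  eapply Rle_trans; [|apply arcosh_lower; lra]. apply ln_nonneg; lra.
Qed.

Lemma H2_self p a : H2_dist p a a = 0.
Proof.
  rewrite H2_dist_ww. unfold ww. rewrite !Rminus_diag. unfold arcosh.
  replace ((uu p ^ 2 * 0 ^ 2 + 0 ^ 2) / (2 * YY p (snd a) * YY p (snd a))) with 0.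
  2:{ unfold Rdiv. ring. }
  replace ((1 + 0) * (1 + 0) - 1) with 0 by ring. rewrite sqrt_0.
  replace (1 + 0 + 0) with 1 by ring. rewrite ln_1. ring.
Qed.

Lemma H2_lower p a b : prime p -> ln (1 + ww p a b) <= uu p * H2_dist p a b.
Proof.
  intro Hp. rewrite H2_dist_ww. pose proof (uu_pos p Hp). pose proof (ww_nonneg p a b).
  rewrite <- Rmult_assoc, Rinv_r by lra. rewrite Rmult_1_l. apply arcosh_lower; lra.
Qed.

Lemma H2_upper p a b : prime p -> uu p * H2_dist p a b <= 2 * ww p a b + sqrt (2 * ww p a b).
Proof.
  intro Hp. rewrite H2_dist_ww. pose proof (uu_pos p Hp). pose proof (ww_nonneg p a b).
  rewrite <- Rmult_assoc, Rinv_r by lra. rewrite Rmult_1_l. apply arcosh_upper; lra.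
Qed.

Lemma ww_from_dist p a b D : prime p -> H2_dist p a b <= D -> 1 + ww p a b <= exp (uu p * D).
Proof.
  intros Hp H. pose proof (H2_lower p a b Hp). pose proof (uu_pos p Hp).
  pose proof (ww_nonneg p a b).
  rewrite <- (exp_ln (1 + ww p a b)) by lra. apply exp_le'.
  eapply Rle_trans; [eauto|]. apply Rmult_le_compat_l; lra.
Qed.

Definition H2map (p m : Z) (c : R) (a : H2_pt) : H2_pt :=
  (powerRZ (IZR p) m * fst a + c, snd a + IZR m).

Lemma YY_shift p t m : prime p -> YY p (t + IZR m) = YY p t * powerRZ (IZR p) m.
Proof. intro Hp. unfold YY. rewrite Rpower_plus, powerRZ_Rpower; auto. apply pR_pos; auto. Qed.

Lemma ww_map p m c a b : prime p -> ww p (H2map p m c a) (H2map p m c b) = ww p a b.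
Proof.
  intro Hp. unfold ww, H2map. simpl. rewrite !YY_shift by auto.
  pose proof (powerRZ_pos' p m Hp). pose proof (YY_pos p (snd a)). pose proof (YY_pos p (snd b)).
  field. repeat split; lra.
Qed.

Lemma H2_map p m c a b : prime p -> H2_dist p (H2map p m c a) (H2map p m c b) = H2_dist p a b.
Proof. intro Hp. rewrite !H2_dist_ww, ww_map; auto. Qed.

Lemma exp_lip a b : Rabs (exp a - exp b) <= Rmax (exp a) (exp b) * Rabs (a - b).
Proof.
  assert (H : forall x y, x <= y -> exp y - exp x <= exp y * (y - x)).
  { intros x y Hxy. pose proof (exp_ineq1_le (x - y)).
    replace (exp x) with (exp y * exp (x - y)) by (rewrite <- exp_plus; f_equal; ring).
    pose proof (exp_pos y). nra. }
  destruct (Rle_dec a b) as [Hab|Hab].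
  - pose proof (H a b Hab). pose proof (exp_le' a b Hab).
    rewrite Rabs_left1 by lra. rewrite Rabs_left1 by lra. rewrite Rmax_right by lra. lra.
  - pose proof (H b a ltac:(lra)). pose proof (exp_le' b a ltac:(lra)).
    rewrite Rabs_right by lra. rewrite Rabs_right by lra. rewrite Rmax_left by lra. lra.
Qed.

Lemma YY_lip p t t' Ymax : prime p -> YY p t <= Ymax -> YY p t' <= Ymax ->
  Rabs (YY p t - YY p t') <= uu p * Ymax * Rabs (t - t').
Proof.
  intros Hp H1 H2. rewrite !YY_exp. pose proof (uu_pos p Hp).
  eapply Rle_trans; [apply exp_lip|].
  replace (t * uu p - t' * uu p) with (uu p * (t - t')) by ring.
  rewrite Rabs_mult, (Rabs_right (uu p)) by lra.
  rewrite <- !YY_exp. apply Rmax_lub_le_impl || idtac.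
  assert (Rmax (YY p t) (YY p t') <= Ymax) by (apply Rmax_lub; auto).
  pose proof (Rabs_pos (t - t')).
  assert (0 <= uu p * Rabs (t - t')) by (apply Rmult_le_pos; lra).
  replace (uu p * Ymax * Rabs (t - t')) with (Ymax * (uu p * Rabs (t - t'))) by ring.
  apply Rmult_le_compat_r; auto.
Qed.

Definition Wc (p : Z) (al be Ymin Ymax : R) : R :=
  (uu p ^ 2 * al ^ 2 + (uu p * Ymax * be) ^ 2) / (2 * Ymin ^ 2).
Definition Kc (p : Z) (al be Ymin Ymax : R) : R :=
  / uu p * (2 * Wc p al be Ymin Ymax + sqrt (2 * Wc p al be Ymin Ymax)).

Lemma sq_le_of_abs x y : Rabs x <= y -> x ^ 2 <= y ^ 2.
Proof. intro H. pose proof (Rabs_pos x). rewrite <- (pow2_abs x). nra. Qed.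

Lemma Wc_nonneg p al be Ymin Ymax : 0 < Ymin -> 0 <= Wc p al be Ymin Ymax.
Proof.
  intro H. unfold Wc. pose proof (pow2_ge_0 (uu p)). pose proof (pow2_ge_0 al).
  pose proof (pow2_ge_0 (uu p * Ymax * be)).
  apply Rmult_le_pos; [nra|]. left. apply Rinv_0_lt_compat. nra.
Qed.

Lemma Kc_nonneg p al be Ymin Ymax : prime p -> 0 < Ymin -> 0 <= Kc p al be Ymin Ymax.
Proof.
  intros Hp H. unfold Kc. pose proof (Wc_nonneg p al be Ymin Ymax H).
  pose proof (uu_pos p Hp). pose proof (sqrt_pos (2 * Wc p al be Ymin Ymax)).
  apply Rmult_le_pos; [left; apply Rinv_0_lt_compat; lra|lra].
Qed.

Lemma H2_lip p a b al be Ymin Ymax d : prime p -> 0 < Ymin ->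
  Ymin <= YY p (snd a) <= Ymax -> Ymin <= YY p (snd b) <= Ymax ->
  Rabs (fst a - fst b) <= al * d -> Rabs (snd a - snd b) <= be * d ->
  0 <= d <= 1 -> 0 <= al -> 0 <= be ->
  H2_dist p a b <= Kc p al be Ymin Ymax * d.
Proof.
  intros Hp HY Ha Hb Hx Ht Hd Hal Hbe.
  pose proof (uu_pos p Hp) as Hu.
  set (W := Wc p al be Ymin Ymax).
  assert (HW : 0 <= W) by (apply Wc_nonneg; auto).
  assert (Hww : ww p a b <= W * d ^ 2).
  { unfold ww, W, Wc.
    assert (HY1 : Rabs (YY p (snd a) - YY p (snd b)) <= uu p * Ymax * (be * d)).
    { eapply Rle_trans; [apply YY_lip; [auto | apply Ha | apply Hb]|].
      apply Rmult_le_compat_l; [|auto]. nra. }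
    apply sq_le_of_abs in Hx. apply sq_le_of_abs in HY1.
    pose proof (pow2_ge_0 (uu p)).
    assert (Hn : uu p ^ 2 * (fst a - fst b) ^ 2 + (YY p (snd a) - YY p (snd b)) ^ 2
              <= (uu p ^ 2 * al ^ 2 + (uu p * Ymax * be) ^ 2) * d ^ 2).
    { replace ((uu p ^ 2 * al ^ 2 + (uu p * Ymax * be) ^ 2) * d ^ 2) with
        (uu p ^ 2 * (al * d) ^ 2 + (uu p * Ymax * (be * d)) ^ 2) by ring.
      apply Rplus_le_compat; auto. apply Rmult_le_compat_l; auto. }
    unfold Rdiv.
    replace ((uu p ^ 2 * al ^ 2 + (uu p * Ymax * be) ^ 2) * / (2 * Ymin ^ 2) * d ^ 2)
      with (((uu p ^ 2 * al ^ 2 + (uu p * Ymax * be) ^ 2) * d ^ 2) * / (2 * Ymin ^ 2)) by ring.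
    apply Rmult_le_compat; auto.
    - pose proof (pow2_ge_0 (fst a - fst b)). pose proof (pow2_ge_0 (YY p (snd a) - YY p (snd b))). nra.
    - left. apply Rinv_0_lt_compat. nra.
    - apply Rinv_le_contravar; nra. }
  pose proof (H2_upper p a b Hp) as Hup.
  assert (Hs : sqrt (2 * ww p a b) <= sqrt (2 * W) * d).
  { rewrite <- (sqrt_square d) by lra. rewrite <- sqrt_mult by nra.
    apply sqrt_le_1_alt. nra. }
  assert (uu p * H2_dist p a b <= uu p * (Kc p al be Ymin Ymax * d)).
  { unfold Kc. fold W.
    replace (uu p * (/ uu p * (2 * W + sqrt (2 * W)) * d)) with ((2 * W + sqrt (2 * W)) * d)
      by (field; lra).
    assert (W * d ^ 2 <= W * d) by (apply Rmult_le_compat_l; nra).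
    lra. }
  apply Rmult_le_reg_l in H; auto.
Qed.

Lemma lub_char (E : R -> Prop) B :
  (exists x, E x) -> (forall x, E x -> x <= B) ->
  Lub_Rbar E = Finite (real (Lub_Rbar E)) /\
  (forall x, E x -> x <= real (Lub_Rbar E)) /\
  (forall ub, (forall x, E x -> x <= ub) -> real (Lub_Rbar E) <= ub).
Proof.
  intros [x0 Hx0] HB.
  destruct (Lub_Rbar_correct E) as [Hub Hl].
  assert (H1 : Rbar_le (Lub_Rbar E) B) by (apply Hl; intros x Hx; simpl; auto).
  assert (H2 : Rbar_le x0 (Lub_Rbar E)) by (apply Hub; auto).
  destruct (Lub_Rbar E) as [M| |] eqn:EM; simpl in *; try contradiction.
  split; [auto|]. split.
  - intros x Hx. specialize (Hub x Hx). exact Hub.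
  - intros ub Hu. exact (Hl (Finite ub) (fun x Hx => Hu x Hx)).
Qed.

Definition TS (p : Z) (v w : Tree_pt) : R -> Prop :=
  fun g => g <= fst v /\ g <= fst w /\
          exists k : Z, g <= IZR k /\ in_pkZ p k (snd v - snd w).

Lemma meet_unfold p v w : Tree_meet p v w = real (Lub_Rbar (TS p v w)).
Proof. reflexivity. Qed.

Lemma TS_min p v w K : in_pkZ p K (snd v - snd w) ->
  TS p v w (Rmin (Rmin (fst v) (fst w)) (IZR K)).
Proof.
  intro H. unfold TS. repeat split.
  - pose proof (Rmin_l (Rmin (fst v) (fst w)) (IZR K)). pose proof (Rmin_l (fst v) (fst w)). lra.
  - pose proof (Rmin_l (Rmin (fst v) (fst w)) (IZR K)). pose proof (Rmin_r (fst v) (fst w)). lra.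
  - exists K. split; auto. apply Rmin_r.
Qed.

Lemma meet_props p v w K : in_pkZ p K (snd v - snd w) ->
  (forall x, TS p v w x -> x <= Tree_meet p v w) /\
  (forall ub, (forall x, TS p v w x -> x <= ub) -> Tree_meet p v w <= ub).
Proof.
  intro H. rewrite meet_unfold.
  destruct (lub_char (TS p v w) (fst v)) as [_ [A B]]; eauto.
  - eexists; apply TS_min; eauto.
  - intros x [Hx _]; auto.
Qed.

Lemma meet_ge p v w K : in_pkZ p K (snd v - snd w) ->
  Rmin (Rmin (fst v) (fst w)) (IZR K) <= Tree_meet p v w.
Proof. intro H. apply (proj1 (meet_props p v w K H)). apply TS_min; auto. Qed.

Lemma meet_le p v w K : in_pkZ p K (snd v - snd w) ->
  Tree_meet p v w <= Rmin (fst v) (fst w).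
Proof.
  intro H. apply (proj2 (meet_props p v w K H)). intros x [H1 [H2 _]].
  apply Rmin_glb; auto.
Qed.

Lemma meet_gt p v w K0 (K : R) : in_pkZ p K0 (snd v - snd w) -> K < Tree_meet p v w ->
  exists k : Z, K < IZR k /\ in_pkZ p k (snd v - snd w).
Proof.
  intros H0 H. destruct (classic (exists x, TS p v w x /\ K < x)) as [[x [[_ [_ [k [Hk Hk']]]] Hx]]|Hn].
  - exists k. split; auto. lra.
  - exfalso. assert (Tree_meet p v w <= K); [|lra].
    apply (proj2 (meet_props p v w K0 H0)). intros x Hx.
    destruct (Rle_dec x K); auto. exfalso; apply Hn; exists x; split; auto; lra.
Qed.

Lemma tree_dist_upper p v w K : in_pkZ p K (snd v - snd w) ->
  Tree_dist p v w <= fst v + fst w - 2 * Rmin (Rmin (fst v) (fst w)) (IZR K).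
Proof. intro H. unfold Tree_dist. pose proof (meet_ge p v w K H). lra. Qed.

Lemma tree_dist_nonneg p v w K : in_pkZ p K (snd v - snd w) -> Rabs (fst v - fst w) <= Tree_dist p v w.
Proof.
  intro H. unfold Tree_dist. pose proof (meet_le p v w K H).
  pose proof (Rmin_l (fst v) (fst w)). pose proof (Rmin_r (fst v) (fst w)).
  unfold Rmin in *. destruct (Rle_dec (fst v) (fst w)).
  - rewrite Rabs_left1 by lra. lra.
  - rewrite Rabs_right by lra. lra.
Qed.

Lemma Zup_ge x : x <= IZR (up x).
Proof. destruct (archimed x). lra. Qed.

Lemma tree_dist_self p v : Tree_dist p v v = 0.
Proof.
  assert (H : in_pkZ p (up (fst v)) (snd v - snd v)) by (rewrite Rminus_diag; apply pk_0).
  pose proof (meet_ge p v v _ H). pose proof (meet_le p v v _ H).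
  pose proof (Zup_ge (fst v)).
  rewrite (Rmin_left (fst v) (fst v)) in * by lra.
  rewrite (Rmin_left (fst v) (IZR (up (fst v)))) in * by lra.
  unfold Tree_dist. lra.
Qed.

Definition Treemap (p m : Z) (c : R) (v : Tree_pt) : Tree_pt :=
  (fst v - IZR m, powerRZ (IZR p) (- m) * snd v + c).

Lemma pk_scale_iff p k m x : prime p ->
  in_pkZ p k (powerRZ (IZR p) (- m) * x) <-> in_pkZ p (k + m) x.
Proof.
  intro Hp. split; intro H.
  - pose proof (pk_scale p k m _ Hp H). rewrite <- Rmult_assoc, <- powerRZ_add in H0 by (apply pR_neq0; auto).
    replace (m + - m)%Z with 0%Z in H0 by lia. simpl in H0. rewrite Rmult_1_l in H0. auto.
  - pose proof (pk_scale p (k + m) (- m) _ Hp H). replace (k + m + - m)%Z with k in H0 by lia. auto.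
Qed.

Lemma meet_map p m c v w K : prime p -> in_pkZ p K (snd v - snd w) ->
  Tree_meet p (Treemap p m c v) (Treemap p m c w) = Tree_meet p v w - IZR m.
Proof.
  intros Hp HK.
  assert (Hd : snd (Treemap p m c v) - snd (Treemap p m c w) = powerRZ (IZR p) (- m) * (snd v - snd w)).
  { unfold Treemap; simpl; ring. }
  assert (HK' : in_pkZ p (K - m) (snd (Treemap p m c v) - snd (Treemap p m c w))).
  { rewrite Hd. apply pk_scale_iff; auto. replace (K - m + m)%Z with K by lia. auto. }
  destruct (meet_props p v w K HK) as [A1 A2].
  destruct (meet_props p _ _ _ HK') as [B1 B2].
  apply Rle_antisym.
  - apply B2. intros x [H1 [H2 [k [H3 H4]]]]. rewrite Hd in H4.
    unfold Treemap in H1, H2; simpl in H1, H2.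
    assert (x + IZR m <= Tree_meet p v w); [|lra].
    apply A1. unfold TS; simpl. repeat split; try lra. exists (k + m)%Z. rewrite plus_IZR. split; [lra|].
    apply pk_scale_iff; auto.
  - assert (Tree_meet p v w <= Tree_meet p (Treemap p m c v) (Treemap p m c w) + IZR m); [|lra].
    apply A2. intros x [H1 [H2 [k [H3 H4]]]].
    assert (x - IZR m <= Tree_meet p (Treemap p m c v) (Treemap p m c w)); [|lra].
    apply B1. unfold TS. refine (conj _ (conj _ _)); [unfold Treemap; simpl; lra | unfold Treemap; simpl; lra | ].
    exists (k - m)%Z.
    rewrite minus_IZR. split; [lra|]. rewrite Hd. apply pk_scale_iff; auto.
    replace (k - m + m)%Z with k by lia; auto.
Qed.

Lemma tree_dist_map p m c v w K : prime p -> in_pkZ p K (snd v - snd w) ->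
  Tree_dist p (Treemap p m c v) (Treemap p m c w) = Tree_dist p v w.
Proof.
  intros Hp HK. unfold Tree_dist. rewrite (meet_map p m c v w K) by auto.
  unfold Treemap; simpl. ring.
Qed.

Lemma Zinvp_add p x y : prime p -> in_Zinvp p x -> in_Zinvp p y -> in_Zinvp p (x + y).
Proof.
  intros Hp Hx Hy. apply Zinvp_pk in Hx, Hy; auto. apply Zinvp_pk; auto.
  destruct Hx as [k Hk], Hy as [k' Hk']. exists (Z.min k k').
  apply pk_add; eapply pk_mono; eauto; lia.
Qed.

Lemma Zinvp_opp p x : prime p -> in_Zinvp p x -> in_Zinvp p (- x).
Proof.
  intros Hp Hx. apply Zinvp_pk in Hx; auto. apply Zinvp_pk; auto.
  destruct Hx as [k Hk]. exists k. apply pk_opp; auto.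
Qed.

Lemma Zinvp_mul p x y : prime p -> in_Zinvp p x -> in_Zinvp p y -> in_Zinvp p (x * y).
Proof.
  intros Hp Hx Hy. apply Zinvp_pk in Hx, Hy; auto. apply Zinvp_pk; auto.
  destruct Hx as [k Hk], Hy as [k' Hk']. exists (k + k')%Z. apply pk_mul; auto.
Qed.

Lemma Zinvp_pow p k : prime p -> in_Zinvp p (powerRZ (IZR p) k).
Proof. intro Hp. apply Zinvp_pk; auto. exists k. apply pk_pow. Qed.

Lemma Zinvp_IZR p z : prime p -> in_Zinvp p (IZR z).
Proof. intro Hp. apply Zinvp_pk; auto. exists 0%Z. apply pk_IZR. Qed.

Lemma Zinvp_diff p x y : prime p -> in_Zinvp p x -> in_Zinvp p y -> exists K, in_pkZ p K (x - y).
Proof.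
  intros Hp Hx Hy. apply Zinvp_pk; auto. unfold Rminus. apply Zinvp_add; auto. apply Zinvp_opp; auto.
Qed.

Lemma powerRZ_inv_l p m : prime p -> powerRZ (IZR p) (- m) * powerRZ (IZR p) m = 1.
Proof.
  intro Hp. rewrite <- powerRZ_add by (apply pR_neq0; auto). replace (- m + m)%Z with 0%Z by lia. reflexivity.
Qed.

Definition MFmap (p m : Z) (c1 c2 : R) (a : MF_pt) : MF_pt :=
  (H2map p m c1 (fst a), Treemap p m c2 (snd a)).

Definition MFinv_c1 p m c1 := - (powerRZ (IZR p) (- m) * c1).
Definition MFinv_c2 p m c2 := - (powerRZ (IZR p) m * c2).

Lemma MFmap_inv p m c1 c2 a : prime p ->
  MFmap p (- m) (MFinv_c1 p m c1) (MFinv_c2 p m c2) (MFmap p m c1 c2 a) = a.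
Proof.
  intro Hp. destruct a as [[x t] [h r]]. unfold MFmap, H2map, Treemap, MFinv_c1, MFinv_c2; simpl.
  rewrite Z.opp_involutive, opp_IZR.
  pose proof (powerRZ_inv_l p m Hp). pose proof (powerRZ_inv_l p (- m) Hp).
  rewrite Z.opp_involutive in H0.
  f_equal; f_equal.
  - replace (powerRZ (IZR p) (- m) * (powerRZ (IZR p) m * x + c1) + - (powerRZ (IZR p) (- m) * c1))
      with ((powerRZ (IZR p) (- m) * powerRZ (IZR p) m) * x) by ring. rewrite H. ring.
  - ring.
  - ring.
  - replace (powerRZ (IZR p) m * (powerRZ (IZR p) (- m) * r + c2) + - (powerRZ (IZR p) m * c2))
      with ((powerRZ (IZR p) m * powerRZ (IZR p) (- m)) * r) by ring. rewrite H0. ring.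
Qed.

Lemma MFmap_in p m c1 c2 a : prime p -> in_Zinvp p c2 -> in_MF p a -> in_MF p (MFmap p m c1 c2 a).
Proof.
  intros Hp Hc [Ht Hb]. destruct a as [[x t] [h r]]. unfold in_MF, in_Tree, MFmap, H2map, Treemap, H2_beta, Tree_beta in *; simpl in *.
  split.
  - apply Zinvp_add; auto. apply Zinvp_mul; auto. apply Zinvp_pow; auto.
  - lra.
Qed.

Lemma MFmap_cont p m c1 c2 g : prime p -> (forall s, 0 <= s <= 1 -> in_MF p (g s)) ->
  MF_cont p g -> MF_cont p (fun s => MFmap p m c1 c2 (g s)).
Proof.
  intros Hp Hg [C1 C2]. split.
  - intros s Hs eps He. destruct (C1 s Hs eps He) as [d [Hd H]]. exists d. split; auto.
    intros s' Hs' Hss. simpl. rewrite H2_map; auto.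
  - intros s Hs eps He. destruct (C2 s Hs eps He) as [d [Hd H]]. exists d. split; auto.
    intros s' Hs' Hss. simpl.
    destruct (Hg s Hs) as [T1 _]. destruct (Hg s' Hs') as [T2 _].
    destruct (Zinvp_diff p _ _ Hp T1 T2) as [K HK].
    rewrite (tree_dist_map p m c2 _ _ K); auto.
Qed.

Lemma MF_dist_map p m c1 c2 a b : prime p -> in_Zinvp p c2 ->
  MF_dist p (MFmap p m c1 c2 a) (MFmap p m c1 c2 b) = MF_dist p a b.
Proof.
  intros Hp Hc. unfold MF_dist.
  apply (pd_transport _ _ _ (MFmap p m c1 c2) (MFmap p (- m) (MFinv_c1 p m c1) (MFinv_c2 p m c2))).
  - intro x. apply MFmap_inv; auto.
  - intros. apply MFmap_in; auto.
  - intros. simpl. apply H2_map; auto.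
  - intros. apply MFmap_cont; auto.
  - intros. apply MFmap_in; auto. unfold MFinv_c2. apply Zinvp_opp; auto. apply Zinvp_mul; auto. apply Zinvp_pow; auto.
  - intros. simpl. apply H2_map; auto.
  - intros. apply MFmap_cont; auto.
Qed.

Definition HPmap (p n : Z) (w1 w2 : R) (z : HP_pt) : HP_pt :=
  (MFmap p n w1 w2 (fst z), MFmap p (- n) w2 w1 (snd z)).

Lemma HPmap_inv p n w1 w2 z : prime p ->
  HPmap p (- n) (MFinv_c1 p n w1) (MFinv_c2 p n w2) (HPmap p n w1 w2 z) = z.
Proof.
  intro Hp. destruct z as [a b]. unfold HPmap; simpl. f_equal.
  - apply MFmap_inv; auto.
  - rewrite Z.opp_involutive.
    replace (MFinv_c2 p n w2) with (MFinv_c1 p (- n) w2) by (unfold MFinv_c1, MFinv_c2; rewrite Z.opp_involutive; auto).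
    replace (MFinv_c1 p n w1) with (MFinv_c2 p (- n) w1) by (unfold MFinv_c1, MFinv_c2; auto).
    pose proof (MFmap_inv p (- n) w2 w1 b Hp). rewrite Z.opp_involutive in H. auto.
Qed.

Lemma HPmap_in p n w1 w2 z : prime p -> in_Zinvp p w1 -> in_Zinvp p w2 -> in_HP p z -> in_HP p (HPmap p n w1 w2 z).
Proof.
  intros Hp H1 H2 [Ha [Hb Hab]]. unfold HPmap. split; [|split]; simpl.
  - apply MFmap_in; auto.
  - apply MFmap_in; auto.
  - destruct z as [[[x t] v] [[x' t'] v']]. unfold MF_beta, H2_beta, MFmap, H2map in *; simpl in *.
    rewrite opp_IZR. lra.
Qed.

Lemma HP_dist_map p N n w1 w2 z z' : prime p -> in_Zinvp p w1 -> in_Zinvp p w2 ->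
  HP_dist p N (HPmap p n w1 w2 z) (HPmap p n w1 w2 z') = HP_dist p N z z'.
Proof.
  intros Hp H1 H2. unfold HP_dist.
  assert (I1 : in_Zinvp p (MFinv_c1 p n w1)) by (unfold MFinv_c1; apply Zinvp_opp; auto; apply Zinvp_mul; auto; apply Zinvp_pow; auto).
  assert (I2 : in_Zinvp p (MFinv_c2 p n w2)) by (unfold MFinv_c2; apply Zinvp_opp; auto; apply Zinvp_mul; auto; apply Zinvp_pow; auto).
  apply (pd_transport _ _ _ (HPmap p n w1 w2) (HPmap p (- n) (MFinv_c1 p n w1) (MFinv_c2 p n w2))).
  - intro x. apply HPmap_inv; auto.
  - intros. apply HPmap_in; auto.
  - intros. simpl. rewrite !MF_dist_map; auto.
  - intros g Hg [C1 C2]. split; intros s Hs eps He.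
    + destruct (C1 s Hs eps He) as [d [Hd H]]. exists d; split; auto. intros. simpl. rewrite MF_dist_map; auto.
    + destruct (C2 s Hs eps He) as [d [Hd H]]. exists d; split; auto. intros. simpl. rewrite MF_dist_map; auto.
  - intros. apply HPmap_in; auto.
  - intros. simpl. rewrite !MF_dist_map; auto.
  - intros g Hg [C1 C2]. split; intros s Hs eps He.
    + destruct (C1 s Hs eps He) as [d [Hd H]]. exists d; split; auto. intros. simpl. rewrite MF_dist_map; auto.
    + destruct (C2 s Hs eps He) as [d [Hd H]]. exists d; split; auto. intros. simpl. rewrite MF_dist_map; auto.
Qed.

Definition conjm (P X : mat2) := mmul (mmul P X) (minv P).

Lemma conjm_mul P X Y : mdet P <> 0 -> mmul (conjm P X) (conjm P Y) = conjm P (mmul X Y).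
Proof.
  intro H. destruct P as [a b c d], X as [x1 x2 x3 x4], Y as [y1 y2 y3 y4].
  unfold conjm, mmul, minv, mdet in *; simpl in *. f_equal; field; auto.
Qed.

Lemma conjm_id P : mdet P <> 0 -> conjm P mid = mid.
Proof.
  intro H. destruct P as [a b c d]. unfold conjm, mmul, minv, mdet, mid in *; simpl in *.
  f_equal; field; auto.
Qed.

Lemma conjm_det P X : mdet P <> 0 -> mdet (conjm P X) = mdet X.
Proof.
  intro H. destruct P as [a b c d], X as [x1 x2 x3 x4].
  unfold conjm, mmul, minv, mdet in *; simpl in *. field; auto.
Qed.

Lemma conjm_inv P X : mdet P <> 0 -> mdet X <> 0 -> minv (conjm P X) = conjm P (minv X).
Proof.
  intros H HX. pose proof (conjm_det P X H) as HD.
  unfold minv at 1. rewrite HD.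
  destruct P as [a b c d], X as [x1 x2 x3 x4].
  unfold conjm, mmul, minv, mdet in *; simpl in *. f_equal; field; auto.
Qed.

Lemma mpow_conj P X k : mdet P <> 0 -> mpow_nat (conjm P X) k = conjm P (mpow_nat X k).
Proof.
  intro H. induction k; simpl.
  - symmetry. apply conjm_id; auto.
  - rewrite IHk. apply conjm_mul; auto.
Qed.

Definition Dn (p : Z) (m : Z) : mat2 := Mat2 (powerRZ (IZR p) m) 0 0 (powerRZ (IZR p) (- m)).

Lemma Dn_mul p m m' : prime p -> mmul (Dn p m) (Dn p m') = Dn p (m + m').
Proof.
  intro Hp. unfold Dn, mmul; simpl. rewrite !powerRZ_add by (apply pR_neq0; auto).
  replace (- (m + m'))%Z with (- m + - m')%Z by lia.
  rewrite powerRZ_add by (apply pR_neq0; auto). f_equal; ring.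
Qed.

Lemma Dn_pow p m k : prime p -> mpow_nat (Dn p m) k = Dn p (m * Z.of_nat k).
Proof.
  intro Hp. induction k.
  - simpl. unfold Dn, mid. replace (m * 0)%Z with 0%Z by lia. simpl. reflexivity.
  - simpl mpow_nat. rewrite IHk, Dn_mul; auto. f_equal. lia.
Qed.

Lemma Dn_det p m : prime p -> mdet (Dn p m) <> 0.
Proof.
  intro Hp. unfold mdet, Dn; simpl. rewrite <- powerRZ_add by (apply pR_neq0; auto).
  replace (m + - m)%Z with 0%Z by lia. simpl. lra.
Qed.

Lemma Dn_inv p m : prime p -> minv (Dn p m) = Dn p (- m).
Proof.
  intro Hp. pose proof (Dn_det p m Hp). unfold minv, Dn, mdet in *; simpl in *.
  rewrite <- powerRZ_add in * by (apply pR_neq0; auto).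
  replace (m + - m)%Z with 0%Z in * by lia. simpl.
  rewrite Z.opp_involutive. f_equal; field.
Qed.

Lemma diag_Dn p : diag_p p = Dn p 1.
Proof. unfold diag_p, Dn. simpl. rewrite !Rmult_1_r. reflexivity. Qed.

Lemma mpowZ_conj p P n : prime p -> mdet P <> 0 ->
  mpowZ (conjm P (diag_p p)) n = conjm P (Dn p n).
Proof.
  intros Hp HP. rewrite diag_Dn. destruct n as [|k|k]; simpl.
  - unfold Dn. simpl. symmetry. rewrite <- (conjm_id P HP). f_equal.
  - rewrite mpow_conj, Dn_pow by auto. f_equal. f_equal. lia.
  - rewrite conjm_inv by (auto; apply Dn_det; auto). rewrite Dn_inv by auto.
    rewrite mpow_conj, Dn_pow by auto. f_equal. f_equal. lia.
Qed.

Lemma mapply_mmul A B v : mapply (mmul A B) v = mapply A (mapply B v).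
Proof. destruct A, B, v. unfold mapply, mmul; simpl. f_equal; ring. Qed.

Lemma minvP_conj p P n v : prime p -> mdet P <> 0 ->
  mapply (minv P) (mapply (conjm P (Dn p n)) v) =
  (powerRZ (IZR p) n * fst (mapply (minv P) v), powerRZ (IZR p) (- n) * snd (mapply (minv P) v)).
Proof.
  intros Hp HP. unfold conjm. rewrite !mapply_mmul.
  destruct P as [a b c d], v as [v1 v2]. unfold mapply, minv, Dn, mdet in *; simpl in *.
  f_equal; field; auto.
Qed.

Lemma P_minvP P v : mdet P <> 0 -> mapply P (mapply (minv P) v) = v.
Proof.
  intro HP. destruct P as [a b c d], v as [v1 v2]. unfold mapply, minv, mdet in *; simpl in *.
  f_equal; field; auto.
Qed.

Lemma minvP_P P v : mdet P <> 0 -> mapply (minv P) (mapply P v) = v.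
Proof.
  intro HP. destruct P as [a b c d], v as [v1 v2]. unfold mapply, minv, mdet in *; simpl in *.
  f_equal; field; auto.
Qed.

Lemma MF_dist_self p a : in_MF p a -> MF_dist p a a = 0.
Proof.
  intro Ha. unfold MF_dist. apply pd_same; auto.
  - split; intros s _ eps He; exists 1; split; try lra; intros; simpl.
    + rewrite H2_self. lra.
    + rewrite tree_dist_self. lra.
  - apply H2_self.
Qed.

Lemma MF_dist_nonneg p a b : 0 <= MF_dist p a b.
Proof. apply pd_nonneg. Qed.

Lemma N00 N : is_norm2 N -> N 0 0 = 0.
Proof.
  intros [_ [_ [Hs _]]]. specialize (Hs 0 0 0). rewrite !Rmult_0_l, Rabs_R0, Rmult_0_l in Hs. auto.
Qed.

Lemma HP_dist_self p N z : in_HP p z -> is_norm2 N -> HP_dist p N z z = 0.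
Proof.
  intros Hz HN. pose proof Hz as [Ha [Hb _]]. unfold HP_dist. apply pd_same.
  - auto.
  - split; intros s _ eps He; exists 1; split; try lra; intros; simpl.
    + rewrite MF_dist_self; auto.
    + rewrite MF_dist_self; auto.
  - rewrite !MF_dist_self; auto. apply N00; auto.
Qed.

Lemma HPmap_zero p z : HPmap p 0 0 0 z = z.
Proof.
  destruct z as [[[x t] [h r]] [[x' t'] [h' r']]]. unfold HPmap, MFmap, H2map, Treemap; simpl.
  f_equal; f_equal; f_equal; ring.
Qed.

Lemma HPmap_comp p n m a1 a2 b1 b2 z : prime p ->
  HPmap p n a1 a2 (HPmap p m b1 b2 z) =
  HPmap p (n + m) (a1 + powerRZ (IZR p) n * b1) (a2 + powerRZ (IZR p) (- n) * b2) z.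
Proof.
  intro Hp. assert (Hn : IZR p <> 0) by (apply pR_neq0; auto).
  destruct z as [[[x t] [h r]] [[x' t'] [h' r']]]. unfold HPmap, MFmap, H2map, Treemap; simpl.
  rewrite !Z.opp_involutive.
  replace (- (n + m))%Z with (- n + - m)%Z by lia.
  rewrite !powerRZ_add by auto. rewrite !plus_IZR, !opp_IZR.
  f_equal; f_equal; f_equal; ring.
Qed.

Definition actP (p : Z) (P : mat2) (g : Gp_elt) (z : HP_pt) : HP_pt :=
  HPmap p (snd g) (fst (mapply (minv P) (fst g))) (snd (mapply (minv P) (fst g))) z.

Lemma minvP_Zinvp p P v : prime p -> in_GL2_Zinvp p P -> in_Zinvp p (fst v) -> in_Zinvp p (snd v) ->
  in_Zinvp p (fst (mapply (minv P) v)) /\ in_Zinvp p (snd (mapply (minv P) v)).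
Proof.
  intros Hp [H11 [H12 [H21 [H22 [Hd Hdi]]]]] H1 H2.
  destruct v as [v1 v2]. unfold mapply, minv; simpl in *. unfold Rdiv.
  split; apply Zinvp_add; auto; apply Zinvp_mul; auto; apply Zinvp_mul; auto; apply Zinvp_opp; auto.
Qed.

Lemma P_Zinvp p P v : prime p -> in_GL2_Zinvp p P -> in_Zinvp p (fst v) -> in_Zinvp p (snd v) ->
  in_Zinvp p (fst (mapply P v)) /\ in_Zinvp p (snd (mapply P v)).
Proof.
  intros Hp [H11 [H12 [H21 [H22 [Hd Hdi]]]]] H1 H2.
  destruct v as [v1 v2]. unfold mapply; simpl in *.
  split; apply Zinvp_add; auto; apply Zinvp_mul; auto.
Qed.

Lemma clauses_1234 p P A N : prime p -> in_GL2_Zinvp p P -> A = conjm P (diag_p p) -> is_norm2 N ->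
  (forall g x, in_Gp p g -> in_HP p x -> in_HP p (actP p P g x)) /\
  (forall x, in_HP p x -> HP_dist p N (actP p P Gp_one x) x = 0) /\
  (forall g h x, in_Gp p g -> in_Gp p h -> in_HP p x ->
      HP_dist p N (actP p P (Gp_mul A g h) x) (actP p P g (actP p P h x)) = 0) /\
  (forall g x y, in_Gp p g -> in_HP p x -> in_HP p y -> HP_dist p N (actP p P g x) (actP p P g y) = HP_dist p N x y).
Proof.
  intros Hp HP HA HN. pose proof HP as HP'. destruct HP' as [_ [_ [_ [_ [Hdet _]]]]].
  split; [|split; [|split]].
  - intros g x [G1 G2] Hx. unfold actP. destruct (minvP_Zinvp p P (fst g) Hp HP G1 G2).
    apply HPmap_in; auto.
  - intros x Hx. unfold actP, Gp_one; simpl.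
    rewrite !Rmult_0_r, !Rplus_0_r. rewrite HPmap_zero. apply HP_dist_self; auto.
  - intros g h x Hg Hh Hx.
    assert (E0 : actP p P (Gp_mul A g h) x = actP p P g (actP p P h x)).
    { unfold actP at 2 3. rewrite HPmap_comp by auto. unfold actP, Gp_mul. cbv beta zeta. cbn [fst snd]. subst A.
      rewrite mpowZ_conj by auto.
      pose proof (minvP_conj p P (snd g) (fst h) Hp Hdet) as E.
      set (u := mapply (conjm P (Dn p (snd g))) (fst h)) in *.
      replace (mapply (minv P) (fst (fst g) + fst u, snd (fst g) + snd u)) with
        (fst (mapply (minv P) (fst g)) + fst (mapply (minv P) u), snd (mapply (minv P) (fst g)) + snd (mapply (minv P) u)).
      - rewrite E. reflexivity.
      - destruct (fst g) as [g1 g2]. destruct u as [u1 u2]. unfold mapply; simpl. f_equal; ring. }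
    rewrite E0. apply HP_dist_self; auto.
    unfold in_Gp in *. destruct Hg, Hh.
    destruct (minvP_Zinvp p P (fst g) Hp HP) as [W1 W2]; auto.
    destruct (minvP_Zinvp p P (fst h) Hp HP) as [W3 W4]; auto.
    unfold actP. apply HPmap_in; auto. apply HPmap_in; auto.
  - intros g x y Hg Hx Hy. unfold actP. destruct Hg as [G1 G2].
    destruct (minvP_Zinvp p P (fst g) Hp HP G1 G2). apply HP_dist_map; auto.
Qed.

Lemma aff_in s s' t : 0 <= s <= 1 -> 0 <= s' <= 1 -> 0 <= t <= 1 -> 0 <= s + t * (s' - s) <= 1.
Proof. intros. nra. Qed.

Lemma cont01_aff {T} (d : T -> T -> R) f s s' : 0 <= s <= 1 -> 0 <= s' <= 1 ->
  cont01 d f -> cont01 d (fun t => f (s + t * (s' - s))).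
Proof.
  intros Hs Hs' Hc t Ht eps He.
  destruct (Hc (s + t * (s' - s)) (aff_in s s' t Hs Hs' Ht) eps He) as [del [Hd H]].
  exists (del / (Rabs (s' - s) + 1)). split.
  - apply Rdiv_lt_0_compat; auto. pose proof (Rabs_pos (s' - s)); lra.
  - intros t' Ht' Htt. apply H. apply aff_in; auto.
    replace (s + t' * (s' - s) - (s + t * (s' - s))) with ((t' - t) * (s' - s)) by ring.
    rewrite Rabs_mult. pose proof (Rabs_pos (s' - s)). pose proof (Rabs_pos (t' - t)).
    assert (Rabs (t' - t) * (Rabs (s' - s) + 1) < del).
    { apply (Rmult_lt_compat_r (Rabs (s' - s) + 1)) in Htt; [|lra].
      unfold Rdiv in Htt. rewrite Rmult_assoc, Rinv_l, Rmult_1_r in Htt by lra. auto. }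
    nra.
Qed.

Lemma MF_restrict p g K : 0 <= K ->
  (forall s, 0 <= s <= 1 -> in_MF p (g s)) -> MF_cont p g ->
  (forall a b, 0 <= a <= 1 -> 0 <= b <= 1 -> H2_dist p (fst (g a)) (fst (g b)) <= K * Rabs (a - b)) ->
  forall s s', 0 <= s <= 1 -> 0 <= s' <= 1 ->
  pset (in_MF p) (MF_cont p) (fun x y => H2_dist p (fst x) (fst y)) (g s) (g s') (K * Rabs (s - s')).
Proof.
  intros HK Hin [C1 C2] Hlip s s' Hs Hs'.
  exists (fun t => g (s + t * (s' - s))). split; [|split; [|split; [|split]]].
  - f_equal. ring.
  - f_equal. ring.
  - intros t Ht. apply Hin. apply aff_in; auto.
  - split.
    + apply (cont01_aff _ (fun t => fst (g t))); auto.
    + apply (cont01_aff _ (fun t => snd (g t))); auto.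
  - intros l Hl Hf. apply chain_lip; auto.
    + pose proof (Rabs_pos (s - s')). nra.
    + intros a b Ha Hb. eapply Rle_trans; [apply Hlip; apply aff_in; auto|].
      replace (s + a * (s' - s) - (s + b * (s' - s))) with ((a - b) * (s' - s)) by ring.
      rewrite Rabs_mult. rewrite <- Rabs_Ropp with (x := s' - s). rewrite <- Rabs_Ropp with (x := a - b).
      replace (- (s' - s)) with (s - s') by ring. replace (- (a - b)) with (b - a) by ring.
      right. ring.
Qed.

Lemma MF_lip p g K : 0 <= K ->
  (forall s, 0 <= s <= 1 -> in_MF p (g s)) -> MF_cont p g ->
  (forall a b, 0 <= a <= 1 -> 0 <= b <= 1 -> H2_dist p (fst (g a)) (fst (g b)) <= K * Rabs (a - b)) ->
  forall s s', 0 <= s <= 1 -> 0 <= s' <= 1 -> MF_dist p (g s) (g s') <= K * Rabs (s - s').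
Proof. intros. apply pd_le. apply MF_restrict; auto. Qed.

Lemma norm_hom N l a b : is_norm2 N -> N (l * a) (l * b) = Rabs l * N a b.
Proof. intros [_ [_ [H _]]]. apply H. Qed.

Lemma N10_pos N : is_norm2 N -> 0 < N 1 0.
Proof.
  intros HN. destruct HN as [H0 [H1 _]]. destruct (H0 1 0); auto.
  exfalso. destruct (H1 1 0); auto. lra.
Qed.

Lemma N01_pos N : is_norm2 N -> 0 < N 0 1.
Proof.
  intros HN. destruct HN as [H0 [H1 _]]. destruct (H0 0 1); auto.
  exfalso. destruct (H1 0 1); auto. lra.
Qed.

Lemma HP_path p N z K1 K2 : monotone_norm2 N -> 0 <= K1 -> 0 <= K2 ->
  (forall s, 0 <= s <= 1 -> in_HP p (z s)) ->
  MF_cont p (fun s => fst (z s)) -> MF_cont p (fun s => snd (z s)) ->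
  (forall a b, 0 <= a <= 1 -> 0 <= b <= 1 -> H2_dist p (fst (fst (z a))) (fst (fst (z b))) <= K1 * Rabs (a - b)) ->
  (forall a b, 0 <= a <= 1 -> 0 <= b <= 1 -> H2_dist p (fst (snd (z a))) (fst (snd (z b))) <= K2 * Rabs (a - b)) ->
  pset (in_HP p) (HP_cont p)
    (fun x y => N (MF_dist p (fst x) (fst y)) (MF_dist p (snd x) (snd y)))
    (z 0) (z 1) (Rmax K1 K2 * N 1 1).
Proof.
  intros [HN HM] HK1 HK2 Hin Hc1 Hc2 L1 L2.
  set (K := Rmax K1 K2).
  assert (HK : 0 <= K) by (unfold K; apply (Rle_trans _ K1); [auto|apply Rmax_l]).
  assert (M1 : forall a b, 0 <= a <= 1 -> 0 <= b <= 1 -> MF_dist p (fst (z a)) (fst (z b)) <= K * Rabs (a - b)).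
  { intros a b Ha Hb. eapply Rle_trans.
    - apply (MF_lip p (fun s => fst (z s)) K1); auto. intros s Hs; apply Hin; auto.
    - apply Rmult_le_compat_r; [apply Rabs_pos| apply Rmax_l]. }
  assert (M2 : forall a b, 0 <= a <= 1 -> 0 <= b <= 1 -> MF_dist p (snd (z a)) (snd (z b)) <= K * Rabs (a - b)).
  { intros a b Ha Hb. eapply Rle_trans.
    - apply (MF_lip p (fun s => snd (z s)) K2); auto. intros s Hs; apply Hin; auto.
    - apply Rmult_le_compat_r; [apply Rabs_pos| apply Rmax_r]. }
  assert (HN11 : 0 <= N 1 1) by (destruct HN; auto).
  exists z. split; [auto|split; [auto|split; [auto|split; [split|]]]].
  - intros s Hs eps He. exists (eps / (K + 1)). split.
    + apply Rdiv_lt_0_compat; lra.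
    + intros s' Hs' Hss. eapply Rle_lt_trans; [apply M1; auto|].
      rewrite Rabs_minus_sym. apply (Rmult_lt_compat_r (K + 1)) in Hss; [|lra].
      unfold Rdiv in Hss. rewrite Rmult_assoc, Rinv_l, Rmult_1_r in Hss by lra.
      pose proof (Rabs_pos (s' - s)). nra.
  - intros s Hs eps He. exists (eps / (K + 1)). split.
    + apply Rdiv_lt_0_compat; lra.
    + intros s' Hs' Hss. eapply Rle_lt_trans; [apply M2; auto|].
      rewrite Rabs_minus_sym. apply (Rmult_lt_compat_r (K + 1)) in Hss; [|lra].
      unfold Rdiv in Hss. rewrite Rmult_assoc, Rinv_l, Rmult_1_r in Hss by lra.
      pose proof (Rabs_pos (s' - s)). nra.
  - intros l Hl Hf. apply chain_lip; auto.
    + apply Rmult_le_pos; auto.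
    + intros a b Ha Hb.
      eapply Rle_trans.
      * apply HM; split; try apply MF_dist_nonneg; [apply M1 | apply M2]; auto.
      * replace (K * Rabs (a - b)) with ((K * Rabs (b - a)) * 1) by (rewrite Rabs_minus_sym; ring).
        rewrite (norm_hom N (K * Rabs (b - a)) 1 1) by auto.
        rewrite Rabs_right by (apply Rle_ge, Rmult_le_pos; auto; apply Rabs_pos). right; ring.
Qed.

Definition clamp (y : R) : R := Rmin 1 (Rmax 0 y).

Lemma clamp_range y : 0 <= clamp y <= 1.
Proof. unfold clamp, Rmin, Rmax. repeat destruct Rle_dec; lra. Qed.

Lemma clamp_lip a b : Rabs (clamp a - clamp b) <= Rabs (a - b).
Proof.
  unfold clamp, Rmin, Rmax. repeat destruct Rle_dec;
  repeat match goal with |- context [Rabs ?x] => destruct (Rcase_abs x); [rewrite (Rabs_left x) by lra | rewrite (Rabs_right x) by lra] end; lra.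
Qed.

Lemma clamp_0 y : y <= 0 -> clamp y = 0.
Proof. intro H. unfold clamp, Rmin, Rmax. repeat destruct Rle_dec; lra. Qed.

Lemma clamp_1 y : 1 <= y -> clamp y = 1.
Proof. intro H. unfold clamp, Rmin, Rmax. repeat destruct Rle_dec; lra. Qed.

Lemma YY_mono p t t' : prime p -> t <= t' -> YY p t <= YY p t'.
Proof. intros Hp H. rewrite !YY_exp. apply exp_le'. pose proof (uu_pos p Hp). nra. Qed.

Lemma lip_cont {T} (d : T -> T -> R) f K : 0 <= K ->
  (forall a b, 0 <= a <= 1 -> 0 <= b <= 1 -> d (f a) (f b) <= K * Rabs (a - b)) -> cont01 d f.
Proof.
  intros HK H s Hs eps He. exists (eps / (K + 1)). split.
  - apply Rdiv_lt_0_compat; lra.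
  - intros s' Hs' Hss. eapply Rle_lt_trans; [apply H; auto|].
    rewrite Rabs_minus_sym. apply (Rmult_lt_compat_r (K + 1)) in Hss; [|lra].
    unfold Rdiv in Hss. rewrite Rmult_assoc, Rinv_l, Rmult_1_r in Hss by lra.
    pose proof (Rabs_pos (s' - s)). nra.
Qed.

Lemma abs_le_inv x y : Rabs x <= y -> - y <= x <= y.
Proof. intro H. unfold Rabs in H. destruct Rcase_abs; lra. Qed.

Lemma tree_lip p (h r : R -> R) be s0 R1 R2 K :
  0 <= be ->
  (forall a b, 0 <= a <= 1 -> 0 <= b <= 1 -> Rabs (h a - h b) <= be * Rabs (a - b)) ->
  (forall s, s < s0 -> r s = R1) -> (forall s, s0 <= s -> r s = R2) ->
  in_pkZ p K (R1 - R2) -> h s0 <= IZR K -> 0 <= s0 <= 1 ->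
  forall a b, 0 <= a <= 1 -> 0 <= b <= 1 -> Tree_dist p (h a, r a) (h b, r b) <= be * Rabs (a - b).
Proof.
  intros Hbe Hh Hr1 Hr2 HK Hs0 Hs0r.
  assert (same : forall a b, 0 <= a <= 1 -> 0 <= b <= 1 -> r a = r b ->
            Tree_dist p (h a, r a) (h b, r b) <= be * Rabs (a - b)).
  { intros a b Ha Hb E.
    assert (Hk : in_pkZ p (up (Rmax (h a) (h b))) (snd (h a, r a) - snd (h b, r b))).
    { simpl. rewrite E, Rminus_diag. apply pk_0. }
    eapply Rle_trans; [apply tree_dist_upper; eauto|]. simpl.
    pose proof (Zup_ge (Rmax (h a) (h b))). pose proof (Rmax_l (h a) (h b)). pose proof (Rmax_r (h a) (h b)).
    pose proof (abs_le_inv _ _ (Hh a b Ha Hb)).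
    set (D := be * Rabs (a - b)) in *. clearbody D.
    unfold Rmin in *. repeat destruct Rle_dec; simpl in *; lra. }
  assert (cross : forall a b, 0 <= a <= 1 -> 0 <= b <= 1 -> a < s0 -> s0 <= b -> in_pkZ p K (r a - r b) ->
            Tree_dist p (h a, r a) (h b, r b) <= be * Rabs (a - b)).
  { intros a b Ha Hb Has Hbs Hk.
    eapply Rle_trans; [apply tree_dist_upper; simpl; eauto|]. simpl.
    pose proof (abs_le_inv _ _ (Hh a b Ha Hb)). pose proof (abs_le_inv _ _ (Hh a s0 Ha Hs0r)).
    pose proof (abs_le_inv _ _ (Hh b s0 Hb Hs0r)).
    rewrite (Rabs_left (a - b)) in * by lra. rewrite (Rabs_left (a - s0)) in * by lra.
    rewrite (Rabs_right (b - s0)) in * by lra.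
    assert (be * - (a - s0) + be * (b - s0) = be * - (a - b)) by ring.
    unfold Rmin in *. repeat destruct Rle_dec; simpl in *; lra. }
  intros a b Ha Hb.
  destruct (Rlt_dec a s0) as [Ha0|Ha0]; destruct (Rlt_dec b s0) as [Hb0|Hb0].
  - apply same; auto. rewrite Hr1, Hr1; auto.
  - apply cross; auto; try lra. rewrite Hr1, Hr2 by lra. auto.
  - assert (Tree_dist p (h a, r a) (h b, r b) = Tree_dist p (h b, r b) (h a, r a)).
    { unfold Tree_dist. assert (Tree_meet p (h a, r a) (h b, r b) = Tree_meet p (h b, r b) (h a, r a)); [|simpl; lra].
      rewrite !meet_unfold. f_equal. apply Lub_Rbar_eqset. intro x. unfold TS; simpl. split.
      - intros [A [B [k [C D]]]]. repeat split; auto. exists k; split; auto.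
        replace (r b - r a) with (- (r a - r b)) by ring. apply pk_opp; auto.
      - intros [A [B [k [C D]]]]. repeat split; auto. exists k; split; auto.
        replace (r a - r b) with (- (r b - r a)) by ring. apply pk_opp; auto. }
    rewrite H, Rabs_minus_sym. apply cross; auto; try lra. rewrite Hr1, Hr2 by lra. auto.
  - apply same; auto. rewrite Hr2, Hr2; auto; lra.
Qed.

Definition ttf (T M1 m2 T' s : R) : R :=
  T + (M1 - T) * clamp (5 * s) - (M1 - m2) * clamp (5 * s - 2) + (T' - m2) * clamp (5 * s - 4).
Definition xf (X X' c s : R) : R := X + (X' - X) * clamp (5 * s - c).
Definition rf (R1 R2 s0 s : R) : R := if Rlt_dec s s0 then R1 else R2.

Definition zpath (X1 T R1 X2 R2 X1' T' R1' X2' R2' M1 m2 : R) (s : R) : HP_pt :=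
  (((xf X1 X1' 1 s, ttf T M1 m2 T' s), (- ttf T M1 m2 T' s, rf R1 R1' (3/10) s)),
   ((xf X2 X2' 3 s, - ttf T M1 m2 T' s), (ttf T M1 m2 T' s, rf R2 R2' (7/10) s))).

Definition HPpt (X1 T R1 X2 R2 : R) : HP_pt :=
  (((X1, T), (- T, R1)), ((X2, - T), (T, R2))).

Lemma clamp5_lip a b c : Rabs (clamp (5 * a - c) - clamp (5 * b - c)) <= 5 * Rabs (a - b).
Proof.
  eapply Rle_trans; [apply clamp_lip|].
  replace (5 * a - c - (5 * b - c)) with (5 * (a - b)) by ring. rewrite Rabs_mult.
  rewrite (Rabs_right 5) by lra. lra.
Qed.

Lemma ttf_lip T M1 m2 T' a b :
  Rabs (ttf T M1 m2 T' a - ttf T M1 m2 T' b) <=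
  5 * (Rabs (M1 - T) + Rabs (M1 - m2) + Rabs (T' - m2)) * Rabs (a - b).
Proof.
  unfold ttf.
  replace (T + (M1 - T) * clamp (5 * a) - (M1 - m2) * clamp (5 * a - 2) + (T' - m2) * clamp (5 * a - 4) -
    (T + (M1 - T) * clamp (5 * b) - (M1 - m2) * clamp (5 * b - 2) + (T' - m2) * clamp (5 * b - 4)))
  with ((M1 - T) * (clamp (5 * a - 0) - clamp (5 * b - 0)) + (- (M1 - m2)) * (clamp (5 * a - 2) - clamp (5 * b - 2))
        + (T' - m2) * (clamp (5 * a - 4) - clamp (5 * b - 4)))
  by (rewrite !Rminus_0_r; ring).
  eapply Rle_trans; [apply Rabs_triang|]. eapply Rle_trans; [apply Rplus_le_compat_r; apply Rabs_triang|].
  rewrite !Rabs_mult, Rabs_Ropp.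
  pose proof (clamp5_lip a b 0). pose proof (clamp5_lip a b 2). pose proof (clamp5_lip a b 4).
  pose proof (Rabs_pos (M1 - T)). pose proof (Rabs_pos (M1 - m2)). pose proof (Rabs_pos (T' - m2)).
  assert (forall u v w, 0 <= u -> v <= w -> u * v <= u * w) by (intros; apply Rmult_le_compat_l; auto).
  pose proof (H5 _ _ _ H2 H). pose proof (H5 _ _ _ H3 H0). pose proof (H5 _ _ _ H4 H1). lra.
Qed.

Lemma xf_lip X X' c a b : Rabs (xf X X' c a - xf X X' c b) <= 5 * Rabs (X' - X) * Rabs (a - b).
Proof.
  unfold xf. replace (X + (X' - X) * clamp (5 * a - c) - (X + (X' - X) * clamp (5 * b - c)))
    with ((X' - X) * (clamp (5 * a - c) - clamp (5 * b - c))) by ring.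
  rewrite Rabs_mult. pose proof (clamp5_lip a b c). pose proof (Rabs_pos (X' - X)). nra.
Qed.

Lemma ttf_range T M1 m2 T' s : m2 <= T <= M1 -> m2 <= T' <= M1 ->
  m2 - (M1 - m2) <= ttf T M1 m2 T' s <= M1 + (M1 - m2).
Proof.
  intros H1 H2. unfold ttf.
  pose proof (clamp_range (5 * s)). pose proof (clamp_range (5 * s - 2)). pose proof (clamp_range (5 * s - 4)).
  split; nra.
Qed.

Definition beta_c (T M1 m2 T' : R) := 5 * (Rabs (M1 - T) + Rabs (M1 - m2) + Rabs (T' - m2)).

Lemma zpath_0 X1 T R1 X2 R2 X1' T' R1' X2' R2' M1 m2 :
  zpath X1 T R1 X2 R2 X1' T' R1' X2' R2' M1 m2 0 = HPpt X1 T R1 X2 R2.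
Proof.
  unfold zpath, HPpt, ttf, xf, rf.
  rewrite !(clamp_0 (5 * 0 - _)) by lra. rewrite (clamp_0 (5 * 0)) by lra.
  destruct (Rlt_dec 0 (3/10)); [|lra]. destruct (Rlt_dec 0 (7/10)); [|lra].
  f_equal; f_equal; f_equal; ring.
Qed.

Lemma zpath_1 X1 T R1 X2 R2 X1' T' R1' X2' R2' M1 m2 :
  zpath X1 T R1 X2 R2 X1' T' R1' X2' R2' M1 m2 1 = HPpt X1' T' R1' X2' R2'.
Proof.
  unfold zpath, HPpt, ttf, xf, rf.
  rewrite !(clamp_1 (5 * 1 - _)) by lra. rewrite (clamp_1 (5 * 1)) by lra.
  destruct (Rlt_dec 1 (3/10)); [lra|]. destruct (Rlt_dec 1 (7/10)); [lra|].
  f_equal; f_equal; f_equal; ring.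
Qed.

Lemma zpath_facts p X1 T R1 X2 R2 X1' T' R1' X2' R2' M1 m2 K1 K2 :
  prime p ->
  m2 <= T <= M1 -> m2 <= T' <= M1 ->
  in_Zinvp p R1 -> in_Zinvp p R1' -> in_Zinvp p R2 -> in_Zinvp p R2' ->
  in_pkZ p K1 (R1 - R1') -> - M1 <= IZR K1 ->
  in_pkZ p K2 (R2 - R2') -> m2 <= IZR K2 ->
  let z := zpath X1 T R1 X2 R2 X1' T' R1' X2' R2' M1 m2 in
  let Ka := Kc p (5 * Rabs (X1' - X1)) (beta_c T M1 m2 T') (YY p (m2 - (M1 - m2))) (YY p (M1 + (M1 - m2))) in
  let Kb := Kc p (5 * Rabs (X2' - X2)) (beta_c T M1 m2 T') (YY p (- (M1 + (M1 - m2)))) (YY p (- (m2 - (M1 - m2)))) in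
  (forall s, 0 <= s <= 1 -> in_HP p (z s)) /\
  MF_cont p (fun s => fst (z s)) /\ MF_cont p (fun s => snd (z s)) /\
  0 <= Ka /\ 0 <= Kb /\
  (forall a b, 0 <= a <= 1 -> 0 <= b <= 1 -> H2_dist p (fst (fst (z a))) (fst (fst (z b))) <= Ka * Rabs (a - b)) /\
  (forall a b, 0 <= a <= 1 -> 0 <= b <= 1 -> H2_dist p (fst (snd (z a))) (fst (snd (z b))) <= Kb * Rabs (a - b)).
Proof.
  intros Hp HT HT' Z1 Z1' Z2 Z2' HK1 HK1' HK2 HK2' z Ka Kb.
  set (tt := ttf T M1 m2 T').
  set (be := beta_c T M1 m2 T').
  assert (Hbe : 0 <= be) by (unfold be, beta_c; pose proof (Rabs_pos (M1 - T)); pose proof (Rabs_pos (M1 - m2));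
     pose proof (Rabs_pos (T' - m2)); lra).
  assert (Htl : forall a b, 0 <= a <= 1 -> 0 <= b <= 1 -> Rabs (tt a - tt b) <= be * Rabs (a - b)).
  { intros. apply ttf_lip. }
  assert (Hr : forall s, m2 - (M1 - m2) <= tt s <= M1 + (M1 - m2)) by (intro; apply ttf_range; auto).
  assert (Hin : forall s, 0 <= s <= 1 -> in_HP p (z s)).
  { intros s Hs. unfold z, zpath, in_HP, in_MF, in_Tree, MF_beta, H2_beta, Tree_beta, rf; simpl.
    repeat split; try lra; repeat destruct Rlt_dec; auto. }
  assert (L1 : forall a b, 0 <= a <= 1 -> 0 <= b <= 1 ->
     H2_dist p (fst (fst (z a))) (fst (fst (z b))) <=
     Kc p (5 * Rabs (X1' - X1)) be (YY p (m2 - (M1 - m2))) (YY p (M1 + (M1 - m2))) * Rabs (a - b)).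
  { intros a b Ha Hb. unfold z, zpath; simpl. apply H2_lip; auto.
    - apply YY_pos.
    - simpl. split; apply YY_mono; auto; apply Hr.
    - simpl. split; apply YY_mono; auto; apply Hr.
    - apply xf_lip.
    - apply Htl; auto.
    - split; [apply Rabs_pos|]. unfold Rabs; destruct Rcase_abs; lra.
    - pose proof (Rabs_pos (X1' - X1)); lra. }
  assert (L2 : forall a b, 0 <= a <= 1 -> 0 <= b <= 1 ->
     H2_dist p (fst (snd (z a))) (fst (snd (z b))) <=
     Kc p (5 * Rabs (X2' - X2)) be (YY p (- (M1 + (M1 - m2)))) (YY p (- (m2 - (M1 - m2)))) * Rabs (a - b)).
  { intros a b Ha Hb. unfold z, zpath; simpl. apply H2_lip; auto.
    - apply YY_pos.
    - simpl. pose proof (Hr a) as Q; unfold tt in Q. split; apply YY_mono; auto; lra.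
    - simpl. pose proof (Hr b) as Q; unfold tt in Q. split; apply YY_mono; auto; lra.
    - apply xf_lip.
    - simpl. unfold tt in Htl. replace (- ttf T M1 m2 T' a - - ttf T M1 m2 T' b) with (- (ttf T M1 m2 T' a - ttf T M1 m2 T' b)) by ring. rewrite Rabs_Ropp. apply Htl; auto.
    - split; [apply Rabs_pos|]. unfold Rabs; destruct Rcase_abs; lra.
    - pose proof (Rabs_pos (X2' - X2)); lra. }
  assert (Kp : forall al Ymin Ymax, 0 < Ymin -> 0 <= Kc p al be Ymin Ymax) by (intros; apply Kc_nonneg; auto).
  split; [auto|]. split; [|split; [|split; [|split; [|split]]]].
  - split.
    + eapply lip_cont; [|apply L1]. apply Kp, YY_pos.
    + apply (lip_cont _ _ be); auto. intros a b Ha Hb. unfold z, zpath; simpl.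
      apply (tree_lip p (fun s => - tt s) (rf R1 R1' (3/10)) be (3/10) R1 R1' K1); auto.
      * intros. replace (- tt a0 - - tt b0) with (- (tt a0 - tt b0)) by ring. rewrite Rabs_Ropp. auto.
      * intros. unfold rf. destruct Rlt_dec; auto; lra.
      * intros. unfold rf. destruct Rlt_dec; auto; lra.
      * unfold tt, ttf. rewrite (clamp_1 (5 * (3/10))) by lra.
        rewrite (clamp_0 (5 * (3/10) - 2)) by lra. rewrite (clamp_0 (5 * (3/10) - 4)) by lra. lra.
      * lra.
  - split.
    + eapply lip_cont; [|apply L2]. apply Kp, YY_pos.
    + apply (lip_cont _ _ be); auto. intros a b Ha Hb. unfold z, zpath; simpl.
      apply (tree_lip p (fun s => tt s) (rf R2 R2' (7/10)) be (7/10) R2 R2' K2); auto.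
      * intros. unfold rf. destruct Rlt_dec; auto; lra.
      * intros. unfold rf. destruct Rlt_dec; auto; lra.
      * unfold tt, ttf. rewrite (clamp_1 (5 * (7/10))) by lra.
        rewrite (clamp_1 (5 * (7/10) - 2)) by lra. rewrite (clamp_0 (5 * (7/10) - 4)) by lra. lra.
      * lra.
  - apply Kp, YY_pos.
  - apply Kp, YY_pos.
  - apply L1.
  - apply L2.
Qed.

Lemma HP_conn p N X1 T R1 X2 R2 X1' T' R1' X2' R2' M1 m2 K1 K2 :
  prime p -> monotone_norm2 N ->
  m2 <= T <= M1 -> m2 <= T' <= M1 ->
  in_Zinvp p R1 -> in_Zinvp p R1' -> in_Zinvp p R2 -> in_Zinvp p R2' ->
  in_pkZ p K1 (R1 - R1') -> - M1 <= IZR K1 ->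
  in_pkZ p K2 (R2 - R2') -> m2 <= IZR K2 ->
  pset (in_HP p) (HP_cont p)
    (fun x y => N (MF_dist p (fst x) (fst y)) (MF_dist p (snd x) (snd y)))
    (HPpt X1 T R1 X2 R2) (HPpt X1' T' R1' X2' R2')
    (Rmax (Kc p (5 * Rabs (X1' - X1)) (beta_c T M1 m2 T') (YY p (m2 - (M1 - m2))) (YY p (M1 + (M1 - m2))))
          (Kc p (5 * Rabs (X2' - X2)) (beta_c T M1 m2 T') (YY p (- (M1 + (M1 - m2)))) (YY p (- (m2 - (M1 - m2)))))
     * N 1 1).
Proof.
  intros Hp HN HT HT' Z1 Z1' Z2 Z2' HK1 HK1' HK2 HK2'.
  destruct (zpath_facts p X1 T R1 X2 R2 X1' T' R1' X2' R2' M1 m2 K1 K2) as [A [B [C [D [E [F G]]]]]]; auto.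
  rewrite <- (zpath_0 X1 T R1 X2 R2 X1' T' R1' X2' R2' M1 m2).
  rewrite <- (zpath_1 X1 T R1 X2 R2 X1' T' R1' X2' R2' M1 m2).
  apply HP_path; auto.
Qed.

Lemma MF_conn1 p X1 T R1 X2 R2 X1' T' R1' X2' R2' M1 m2 K1 K2 :
  prime p ->
  m2 <= T <= M1 -> m2 <= T' <= M1 ->
  in_Zinvp p R1 -> in_Zinvp p R1' -> in_Zinvp p R2 -> in_Zinvp p R2' ->
  in_pkZ p K1 (R1 - R1') -> - M1 <= IZR K1 ->
  in_pkZ p K2 (R2 - R2') -> m2 <= IZR K2 ->
  (exists L, pset (in_MF p) (MF_cont p) (fun x y => H2_dist p (fst x) (fst y))
    (fst (HPpt X1 T R1 X2 R2)) (fst (HPpt X1' T' R1' X2' R2')) L) /\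
  (exists L, pset (in_MF p) (MF_cont p) (fun x y => H2_dist p (fst x) (fst y))
    (snd (HPpt X1 T R1 X2 R2)) (snd (HPpt X1' T' R1' X2' R2')) L).
Proof.
  intros Hp HT HT' Z1 Z1' Z2 Z2' HK1 HK1' HK2 HK2'.
  destruct (zpath_facts p X1 T R1 X2 R2 X1' T' R1' X2' R2' M1 m2 K1 K2) as [A [B [C [D [E [F G]]]]]]; auto.
  rewrite <- (zpath_0 X1 T R1 X2 R2 X1' T' R1' X2' R2' M1 m2).
  rewrite <- (zpath_1 X1 T R1 X2 R2 X1' T' R1' X2' R2' M1 m2).
  split; eexists.
  - apply (MF_restrict p (fun s => fst (zpath X1 T R1 X2 R2 X1' T' R1' X2' R2' M1 m2 s))); auto; try lra.
    intros s Hs; apply A; auto.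
  - apply (MF_restrict p (fun s => snd (zpath X1 T R1 X2 R2 X1' T' R1' X2' R2' M1 m2 s))); auto; try lra.
    intros s Hs; apply A; auto.
Qed.

Lemma in_HP_dec p z : in_HP p z ->
  exists X1 T R1 X2 R2, z = HPpt X1 T R1 X2 R2 /\ in_Zinvp p R1 /\ in_Zinvp p R2.
Proof.
  destruct z as [[[x t] [h r]] [[x' t'] [h' r']]].
  intros [[Z1 B1] [[Z2 B2] B]]. unfold MF_beta, H2_beta, Tree_beta, in_Tree in *; simpl in *.
  exists x, t, r, x', r'. split; [|split; auto].
  unfold HPpt. f_equal; f_equal; f_equal; lra.
Qed.

Lemma conn_any p N z z' : prime p -> monotone_norm2 N -> in_HP p z -> in_HP p z' ->
  (exists L, pset (in_HP p) (HP_cont p)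
    (fun x y => N (MF_dist p (fst x) (fst y)) (MF_dist p (snd x) (snd y))) z z' L) /\
  (exists L, pset (in_MF p) (MF_cont p) (fun x y => H2_dist p (fst x) (fst y)) (fst z) (fst z') L) /\
  (exists L, pset (in_MF p) (MF_cont p) (fun x y => H2_dist p (fst x) (fst y)) (snd z) (snd z') L).
Proof.
  intros Hp HN Hz Hz'.
  destruct (in_HP_dec p z Hz) as [X1 [T [R1 [X2 [R2 [-> [Z1 Z2]]]]]]].
  destruct (in_HP_dec p z' Hz') as [X1' [T' [R1' [X2' [R2' [-> [Z1' Z2']]]]]]].
  destruct (Zinvp_diff p R1 R1' Hp Z1 Z1') as [K1 HK1].
  destruct (Zinvp_diff p R2 R2' Hp Z2 Z2') as [K2 HK2].
  set (M1 := Rmax (Rmax T T') (- IZR K1)).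
  set (m2 := Rmin (Rmin T T') (IZR K2)).
  assert (A1 : T <= M1) by (unfold M1; eapply Rle_trans; [apply Rmax_l|apply Rmax_l]).
  assert (A2 : T' <= M1) by (unfold M1; eapply Rle_trans; [apply Rmax_r|apply Rmax_l]).
  assert (A3 : - IZR K1 <= M1) by (unfold M1; apply Rmax_r).
  assert (B1 : m2 <= T) by (unfold m2; eapply Rle_trans; [apply Rmin_l|apply Rmin_l]).
  assert (B2 : m2 <= T') by (unfold m2; eapply Rle_trans; [apply Rmin_l|apply Rmin_r]).
  assert (B3 : m2 <= IZR K2) by (unfold m2; apply Rmin_r).
  split; [|apply (MF_conn1 p X1 T R1 X2 R2 X1' T' R1' X2' R2' M1 m2 K1 K2); auto; lra].
  eexists. apply (HP_conn p N X1 T R1 X2 R2 X1' T' R1' X2' R2' M1 m2 K1 K2); auto; lra.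
Qed.

Lemma div_le_mul x d E : 0 < d -> x / d <= E -> x <= E * d.
Proof.
  intros Hd H. apply (Rmult_le_compat_r d) in H; [|lra].
  unfold Rdiv in H. rewrite Rmult_assoc, Rinv_l, Rmult_1_r in H by lra. auto.
Qed.

Lemma H2_t_bound p a b D : prime p -> H2_dist p a b <= D ->
  Rabs (snd a - snd b) <= ln (2 * exp (uu p * D) + 2) / uu p.
Proof.
  intros Hp H. pose proof (ww_from_dist p a b D Hp H) as HE.
  set (E := exp (uu p * D)) in *.
  pose proof (uu_pos p Hp) as Hu.
  pose proof (YY_pos p (snd a)) as Ya. pose proof (YY_pos p (snd b)) as Yb.
  set (ya := YY p (snd a)) in *. set (yb := YY p (snd b)) in *.
  assert (Hw : (ya - yb) ^ 2 / (2 * ya * yb) <= ww p a b).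
  { unfold ww. fold ya yb. unfold Rdiv. apply Rmult_le_compat_r.
    - left; apply Rinv_0_lt_compat; nra.
    - pose proof (pow2_ge_0 (uu p)). pose proof (pow2_ge_0 (fst a - fst b)). nra. }
  assert (Hq : (ya - yb) ^ 2 <= 2 * E * ya * yb).
  { assert ((ya - yb) ^ 2 / (2 * ya * yb) <= E) by lra.
    apply div_le_mul in H0; [|nra]. nra. }
  assert (HE1 : 0 < E) by apply exp_pos.
  assert (R1 : ya <= (2 * E + 2) * yb) by nra.
  assert (R2 : yb <= (2 * E + 2) * ya) by nra.
  assert (L1 : ln ya <= ln (2 * E + 2) + ln yb).
  { rewrite <- ln_mult by nra. apply ln_le'; auto. }
  assert (L2 : ln yb <= ln (2 * E + 2) + ln ya).
  { rewrite <- ln_mult by nra. apply ln_le'; auto. }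
  unfold ya, yb in L1, L2. rewrite !YY_exp, !ln_exp in L1, L2.
  assert (Q : ln (2 * E + 2) / uu p * uu p = ln (2 * E + 2)) by (field; lra).
  apply Rabs_le. split.
  - apply (Rmult_le_reg_r (uu p)); auto. nra.
  - apply (Rmult_le_reg_r (uu p)); auto. nra.
Qed.

Lemma H2_x_bound p a b D : prime p -> H2_dist p a b <= D ->
  uu p ^ 2 * (fst a - fst b) ^ 2 <= 2 * exp (uu p * D) * YY p (snd a) * YY p (snd b).
Proof.
  intros Hp H. pose proof (ww_from_dist p a b D Hp H) as HE.
  pose proof (YY_pos p (snd a)) as Ya. pose proof (YY_pos p (snd b)) as Yb.
  unfold ww in HE.
  set (ya := YY p (snd a)) in *. set (yb := YY p (snd b)) in *.
  set (E := exp (uu p * D)) in *.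
  pose proof (pow2_ge_0 (ya - yb)).
  assert ((uu p ^ 2 * (fst a - fst b) ^ 2 + (ya - yb) ^ 2) / (2 * ya * yb) <= E).
  { pose proof (ww_nonneg p a b). unfold ww in H1. fold ya yb in H1. lra. }
  apply div_le_mul in H1; [|nra]. nra.
Qed.

Lemma interval_conn (P : R -> Prop) : P 0 ->
  (forall s, 0 <= s <= 1 -> exists del, 0 < del /\
     forall s', 0 <= s' <= 1 -> Rabs (s' - s) < del -> (P s <-> P s')) -> P 1.
Proof.
  intros H0 Hloc.
  set (E := fun x => 0 <= x <= 1 /\ forall y, 0 <= y <= x -> P y).
  assert (Hb : bound E) by (exists 1; intros x [Hx _]; lra).
  assert (Hne : exists x, E x) by (exists 0; split; [lra|]; intros y Hy; replace y with 0 by lra; auto).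
  destruct (completeness E Hb Hne) as [sg [Hub Hlub]].
  assert (Hs0 : 0 <= sg) by (apply Hub; destruct Hne as [x Hx]; unfold E; split; [lra|];
     intros y Hy; replace y with 0 by lra; auto).
  assert (Hs1 : sg <= 1) by (apply Hlub; intros x [Hx _]; lra).
  destruct (Hloc sg (conj Hs0 Hs1)) as [del [Hd Hl]].
  assert (Hx : exists x, E x /\ sg - del < x).
  { destruct (classic (exists x, E x /\ sg - del < x)) as [H|H]; auto.
    exfalso. assert (sg <= sg - del); [|lra]. apply Hlub. intros x Hx.
    destruct (Rle_dec x (sg - del)); auto. exfalso; apply H; exists x; split; auto; lra. }
  destruct Hx as [x [[Hx1 Hx2] Hx3]].
  assert (Hxs : x <= sg) by (apply Hub; split; auto).
  assert (Psg : P sg).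
  { apply (Hl x); [lra| rewrite Rabs_left1 by lra; lra|]. apply Hx2; lra. }
  set (y := Rmin (sg + del / 2) 1).
  assert (Ey : E y).
  { split; [unfold y, Rmin; destruct Rle_dec; lra|]. intros y' Hy'.
    destruct (Rle_dec y' x); [apply Hx2; lra|].
    assert (y <= sg + del / 2) by (unfold y; apply Rmin_l).
    apply (Hl y'); auto; [unfold y in *; pose proof (Rmin_r (sg + del / 2) 1); lra|].
    apply Rabs_def1; lra. }
  assert (y <= sg) by (apply Hub; auto).
  assert (Hy1 : y = 1).
  { unfold y in *. unfold Rmin in *. destruct Rle_dec; lra. }
  destruct Ey as [_ Ey]. apply Ey. lra.
Qed.

Lemma MF_tree p g (K : Z) :
  prime p -> (forall s, 0 <= s <= 1 -> in_MF p (g s)) -> MF_cont p g ->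
  (forall s, 0 <= s <= 1 -> IZR K < fst (snd (g s))) ->
  in_pkZ p K (snd (snd (g 1)) - snd (snd (g 0))).
Proof.
  intros Hp Hin [_ C2] Hh.
  apply (interval_conn (fun s => in_pkZ p K (snd (snd (g s)) - snd (snd (g 0))))).
  - rewrite Rminus_diag. apply pk_0.
  - intros s Hs. pose proof (Hh s Hs) as Hhs.
    destruct (C2 s Hs (fst (snd (g s)) - IZR K)) as [del [Hd Hc]]; [lra|].
    exists del. split; auto. intros s' Hs' Hss.
    specialize (Hc s' Hs' Hss). pose proof (Hh s' Hs') as Hhs'.
    destruct (Hin s Hs) as [T1 _]. destruct (Hin s' Hs') as [T2 _].
    destruct (Zinvp_diff p _ _ Hp T1 T2) as [K0 HK0].
    assert (Hm : IZR K < Tree_meet p (snd (g s)) (snd (g s'))).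
    { unfold Tree_dist in Hc. lra. }
    destruct (meet_gt p _ _ K0 (IZR K) HK0 Hm) as [k [Hk1 Hk2]].
    apply lt_IZR in Hk1.
    assert (HK : in_pkZ p K (snd (snd (g s)) - snd (snd (g s')))) by (apply (pk_mono p K k); auto; lia).
    split; intro H.
    + replace (snd (snd (g s')) - snd (snd (g 0))) with
        ((snd (snd (g s)) - snd (snd (g 0))) - (snd (snd (g s)) - snd (snd (g s')))) by ring.
      apply pk_sub; auto.
    + replace (snd (snd (g s)) - snd (snd (g 0))) with
        ((snd (snd (g s')) - snd (snd (g 0))) + (snd (snd (g s)) - snd (snd (g s')))) by ring.
      apply pk_add; auto.
Qed.

Definition Cb (p : Z) (D : R) : R := ln (2 * exp (uu p * D) + 2) / uu p.

Lemma up_le x : IZR (up x) <= x + 1.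
Proof. destruct (archimed x). lra. Qed.

Lemma MF_ball p a b D0 : prime p -> in_MF p a -> in_MF p b ->
  (exists L, pset (in_MF p) (MF_cont p) (fun x y => H2_dist p (fst x) (fst y)) a b L) ->
  MF_dist p a b <= D0 ->
  H2_dist p (fst a) (fst b) <= D0 + 1 /\
  in_pkZ p (up (fst (snd a) - Cb p (D0 + 1)) - 2) (snd (snd b) - snd (snd a)).
Proof.
  intros Hp Ha Hb Hne HD.
  destruct (pd_approx _ _ _ a b 1 Hne ltac:(lra)) as [L [[g [G0 [G1 [Gin [Gc Gl]]]]] HL]].
  fold (MF_dist p a b) in HL.
  pose proof (chain_01 _ g L Gl) as H01. rewrite G0, G1 in H01.
  split; [lra|].
  rewrite <- G0, <- G1. apply MF_tree; auto.
  intros s Hs. pose proof (chain_0s1 _ g L s Hs Gl) as H0s.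
  pose proof (H2_nonneg p (fst (g s)) (fst (g 1)) Hp).
  assert (Hd : H2_dist p (fst (g 0)) (fst (g s)) <= D0 + 1) by lra.
  pose proof (H2_t_bound p _ _ _ Hp Hd) as Ht. fold (Cb p (D0 + 1)) in Ht.
  destruct (Gin s Hs) as [_ Bs]. destruct (Gin 0 ltac:(lra)) as [_ B0].
  unfold H2_beta, Tree_beta in Bs, B0.
  pose proof (abs_le_inv _ _ Ht).
  pose proof (up_le (fst (snd (g 0)) - Cb p (D0 + 1))).
  rewrite minus_IZR. simpl. lra.
Qed.

Lemma N_lower1 N a b : monotone_norm2 N -> 0 <= a -> 0 <= b -> a * N 1 0 <= N a b.
Proof.
  intros [HN HM] Ha Hb. replace (a * N 1 0) with (N (a * 1) (a * 0)).
  - rewrite Rmult_1_r, Rmult_0_r. apply HM; lra.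
  - rewrite norm_hom by auto. rewrite Rabs_right by lra. auto.
Qed.

Lemma N_lower2 N a b : monotone_norm2 N -> 0 <= a -> 0 <= b -> b * N 0 1 <= N a b.
Proof.
  intros [HN HM] Ha Hb. replace (b * N 0 1) with (N (b * 0) (b * 1)).
  - rewrite Rmult_1_r, Rmult_0_r. apply HM; lra.
  - rewrite norm_hom by auto. rewrite Rabs_right by lra. auto.
Qed.

Lemma HP_ball p N x y r : prime p -> monotone_norm2 N -> in_HP p x -> in_HP p y ->
  HP_dist p N x y <= r ->
  MF_dist p (fst x) (fst y) * N 1 0 <= r + 1 /\ MF_dist p (snd x) (snd y) * N 0 1 <= r + 1.
Proof.
  intros Hp HN Hx Hy Hr.
  destruct (conn_any p N x y Hp HN Hx Hy) as [Hne _].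
  destruct (pd_approx _ _ _ x y 1 Hne ltac:(lra)) as [L [[g [G0 [G1 [Gin [Gc Gl]]]]] HL]].
  fold (HP_dist p N x y) in HL.
  pose proof (chain_01 _ g L Gl) as H01. rewrite G0, G1 in H01. simpl in H01.
  pose proof (MF_dist_nonneg p (fst x) (fst y)). pose proof (MF_dist_nonneg p (snd x) (snd y)).
  pose proof (N_lower1 N _ _ HN H H0). pose proof (N_lower2 N _ _ HN H H0). split; lra.
Qed.

Lemma abs_from_sq u d Q : 0 < u -> u ^ 2 * d ^ 2 <= Q -> Rabs d <= sqrt Q / u.
Proof.
  intros Hu H. assert (Rabs d * u <= sqrt Q); [|apply (Rmult_le_reg_r u); auto; unfold Rdiv; rewrite Rmult_assoc, Rinv_l, Rmult_1_r by lra; auto].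
  rewrite <- (sqrt_square (Rabs d * u)) by (apply Rmult_le_pos; [apply Rabs_pos|lra]).
  apply sqrt_le_1_alt. replace (Rabs d * u * (Rabs d * u)) with (u ^ 2 * (Rabs d) ^ 2) by ring.
  rewrite pow2_abs. auto.
Qed.

Lemma one_point p N xi1 tau rho1 xi2 rho2 r X1 T R1 X2 R2 :
  prime p -> monotone_norm2 N ->
  in_HP p (HPpt xi1 tau rho1 xi2 rho2) -> in_HP p (HPpt X1 T R1 X2 R2) ->
  HP_dist p N (HPpt xi1 tau rho1 xi2 rho2) (HPpt X1 T R1 X2 R2) <= r ->
  let D1 := (r + 1) / N 1 0 + 1 in
  let D2 := (r + 1) / N 0 1 + 1 in
  Rabs (tau - T) <= Cb p D1 /\
  Rabs (xi1 - X1) <= sqrt (2 * exp (uu p * D1) * YY p tau * YY p (tau + Cb p D1)) / uu p /\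
  in_pkZ p (up (- tau - Cb p D1) - 2) (R1 - rho1) /\
  Rabs (xi2 - X2) <= sqrt (2 * exp (uu p * D2) * YY p (- tau) * YY p (- tau + Cb p D2)) / uu p /\
  in_pkZ p (up (tau - Cb p D2) - 2) (R2 - rho2).
Proof.
  intros Hp HN Hx Hy Hr D1 D2.
  pose proof (N10_pos N (proj1 HN)) as N1. pose proof (N01_pos N (proj1 HN)) as N2.
  destruct (HP_ball p N _ _ r Hp HN Hx Hy Hr) as [M1 M2].
  destruct (conn_any p N _ _ Hp HN Hx Hy) as [_ [C1 C2]].
  assert (E1 : MF_dist p (fst (HPpt xi1 tau rho1 xi2 rho2)) (fst (HPpt X1 T R1 X2 R2)) <= (r + 1) / N 1 0).
  { apply (Rmult_le_reg_r (N 1 0)); auto. unfold Rdiv. rewrite Rmult_assoc, Rinv_l by lra. lra. }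
  assert (E2 : MF_dist p (snd (HPpt xi1 tau rho1 xi2 rho2)) (snd (HPpt X1 T R1 X2 R2)) <= (r + 1) / N 0 1).
  { apply (Rmult_le_reg_r (N 0 1)); auto. unfold Rdiv. rewrite Rmult_assoc, Rinv_l by lra. lra. }
  destruct Hx as [Hx1 [Hx2 _]]. destruct Hy as [Hy1 [Hy2 _]].
  destruct (MF_ball p _ _ _ Hp Hx1 Hy1 C1 E1) as [F1 G1].
  destruct (MF_ball p _ _ _ Hp Hx2 Hy2 C2 E2) as [F2 G2].
  fold D1 in F1, G1. fold D2 in F2, G2.
  simpl in F1, G1, F2, G2.
  pose proof (uu_pos p Hp) as Hu.
  pose proof (H2_t_bound p _ _ _ Hp F1) as T1. simpl in T1.
  pose proof (H2_t_bound p _ _ _ Hp F2) as T2. simpl in T2.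
  fold (Cb p D1) in T1. fold (Cb p D2) in T2.
  pose proof (H2_x_bound p _ _ _ Hp F1) as X1b. simpl in X1b.
  pose proof (H2_x_bound p _ _ _ Hp F2) as X2b. simpl in X2b.
  pose proof (abs_le_inv _ _ T1). pose proof (abs_le_inv _ _ T2).
  split; [auto|]. split; [|split; [|split]].
  - apply abs_from_sq; auto. eapply Rle_trans; [apply X1b|].
    apply Rmult_le_compat_l.
    + pose proof (exp_pos (uu p * D1)). pose proof (YY_pos p tau). nra.
    + apply YY_mono; auto; lra.
  - replace (- tau - Cb p D1) with (- tau - Cb p D1) by ring. auto.
  - apply abs_from_sq; auto. eapply Rle_trans; [apply X2b|].
    apply Rmult_le_compat_l.
    + pose proof (exp_pos (uu p * D2)). pose proof (YY_pos p (- tau)). nra.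
    + apply YY_mono; auto; lra.
  - auto.
Qed.

Lemma HPmap_HPpt p n w1 w2 X1 T R1 X2 R2 : prime p ->
  HPmap p n w1 w2 (HPpt X1 T R1 X2 R2) =
  HPpt (powerRZ (IZR p) n * X1 + w1) (T + IZR n) (powerRZ (IZR p) (- n) * R1 + w2)
       (powerRZ (IZR p) (- n) * X2 + w2) (powerRZ (IZR p) n * R2 + w1).
Proof.
  intro Hp. unfold HPmap, HPpt, MFmap, H2map, Treemap; simpl. rewrite Z.opp_involutive, opp_IZR.
  f_equal; f_equal; f_equal; ring.
Qed.

Lemma tree_alg p K J N0 s R rho w : prime p -> in_pkZ p K (R - rho) ->
  in_pkZ p K (powerRZ (IZR p) s * R + w - rho) -> in_pkZ p J rho -> (Z.abs s <= N0)%Z ->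
  in_pkZ p (Z.min K J - N0) w.
Proof.
  intros Hp H1 H2 H3 Hs.
  replace w with ((powerRZ (IZR p) s * R + w - rho) - powerRZ (IZR p) s * (R - rho) + rho - powerRZ (IZR p) s * rho) by ring.
  apply pk_sub; [apply pk_add; [apply pk_sub|]|].
  - apply (pk_mono p _ K); auto; lia.
  - apply (pk_mono p _ (K + s)); [auto|lia|]. apply pk_scale; auto.
  - apply (pk_mono p _ J); auto; lia.
  - apply (pk_mono p _ (J + s)); [auto|lia|]. apply pk_scale; auto.
Qed.

Lemma int_bound p Q w W : prime p -> in_pkZ p Q w -> Rabs w <= W ->
  exists z, w = IZR z * powerRZ (IZR p) Q /\ (- up (W / powerRZ (IZR p) Q) <= z <= up (W / powerRZ (IZR p) Q))%Z.
Proof.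
  intros Hp [z Hz] HW. exists z. split; auto.
  pose proof (powerRZ_pos' p Q Hp) as HQ.
  assert (Rabs (IZR z) <= W / powerRZ (IZR p) Q).
  { apply (Rmult_le_reg_r (powerRZ (IZR p) Q)); auto. unfold Rdiv. rewrite Rmult_assoc, Rinv_l, Rmult_1_r by lra.
    rewrite <- (Rabs_right (powerRZ (IZR p) Q)) by lra. rewrite <- Rabs_mult, <- Hz. auto. }
  destruct (archimed (W / powerRZ (IZR p) Q)) as [A _].
  pose proof (abs_le_inv _ _ H).
  assert (IZR z < IZR (up (W / powerRZ (IZR p) Q))) by lra.
  assert (IZR (- z) < IZR (up (W / powerRZ (IZR p) Q))) by (rewrite opp_IZR; lra).
  apply lt_IZR in H1. apply lt_IZR in H2. lia.
Qed.

Definition zr (M : Z) : list Z := map (fun i => (Z.of_nat i - M)%Z) (seq 0 (Z.to_nat (2 * M + 1))).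

Lemma in_zr M z : (- M <= z <= M)%Z -> In z (zr M).
Proof.
  intro H. unfold zr. apply in_map_iff. exists (Z.to_nat (z + M)). split.
  - rewrite Z2Nat.id by lia. lia.
  - apply in_seq. lia.
Qed.

Lemma pow_le_Rpower p n C : prime p -> IZR n <= C -> powerRZ (IZR p) n <= Rpower (IZR p) C.
Proof.
  intros Hp H. rewrite powerRZ_Rpower by (apply pR_pos; auto).
  apply Rle_Rpower; auto. pose proof (pR_gt1 p Hp). lra.
Qed.

Lemma proper_clause p N P : prime p -> monotone_norm2 N -> in_GL2_Zinvp p P ->
  forall x r, in_HP p x -> exists lg : list Gp_elt, forall g, in_Gp p g ->
      (exists y, in_HP p y /\ HP_dist p N x y <= r /\ HP_dist p N x (actP p P g y) <= r) -> In g lg.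
Proof.
  intros Hp HN HP x r Hx.
  pose proof HP as HP'. destruct HP' as [_ [_ [_ [_ [Hdet _]]]]].
  destruct (in_HP_dec p x Hx) as [xi1 [tau [rho1 [xi2 [rho2 [Ex [Zr1 Zr2]]]]]]].
  apply Zinvp_pk in Zr1, Zr2; auto. destruct Zr1 as [J1 HJ1]. destruct Zr2 as [J2 HJ2].
  set (D1 := (r + 1) / N 1 0 + 1). set (D2 := (r + 1) / N 0 1 + 1).
  set (C1 := Cb p D1). set (C2 := Cb p D2).
  set (B1 := sqrt (2 * exp (uu p * D1) * YY p tau * YY p (tau + C1)) / uu p).
  set (B2 := sqrt (2 * exp (uu p * D2) * YY p (- tau) * YY p (- tau + C2)) / uu p).
  set (K1 := (up (- tau - C1) - 2)%Z). set (K2 := (up (tau - C2) - 2)%Z).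
  set (N0 := Z.abs (up (2 * C1))).
  set (Q := (Z.min (Z.min K2 J2 - N0) (Z.min K1 J1 - N0))%Z).
  set (PW := Rpower (IZR p) (2 * C1)).
  set (W := B1 + Rabs xi1 + PW * (Rabs xi1 + B1) + (B2 + Rabs xi2 + PW * (Rabs xi2 + B2))).
  set (Z0 := up (W / powerRZ (IZR p) Q)).
  exists (flat_map (fun n => flat_map (fun z1 => map (fun z2 =>
            (mapply P (IZR z1 * powerRZ (IZR p) Q, IZR z2 * powerRZ (IZR p) Q), n)) (zr Z0)) (zr Z0)) (zr N0)).
  intros [[v1 v2] n] [G1 G2] [y [Hy [Hxy Hxgy]]]. simpl in G1, G2.
  destruct (in_HP_dec p y Hy) as [X1 [T [R1 [X2 [R2 [Ey [ZR1 ZR2]]]]]]].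
  set (w := mapply (minv P) (v1, v2)).
  destruct (minvP_Zinvp p P (v1, v2) Hp HP G1 G2) as [Zw1 Zw2]. fold w in Zw1, Zw2.
  assert (Egy : actP p P ((v1, v2), n) y =
     HPpt (powerRZ (IZR p) n * X1 + fst w) (T + IZR n) (powerRZ (IZR p) (- n) * R1 + snd w)
       (powerRZ (IZR p) (- n) * X2 + snd w) (powerRZ (IZR p) n * R2 + fst w)).
  { unfold actP. simpl. fold w. rewrite Ey. apply HPmap_HPpt; auto. }
  assert (Hgy : in_HP p (actP p P ((v1, v2), n) y)).
  { unfold actP. simpl. apply HPmap_in; auto. }
  rewrite Ex in Hx, Hxy, Hxgy. rewrite Ey in Hy, Hxy. rewrite Egy in Hgy, Hxgy.
  destruct (one_point p N xi1 tau rho1 xi2 rho2 r X1 T R1 X2 R2 Hp HN Hx Hy Hxy)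
    as [A1 [A2 [A3 [A4 A5]]]].
  destruct (one_point p N xi1 tau rho1 xi2 rho2 r _ _ _ _ _ Hp HN Hx Hgy Hxgy)
    as [B1' [B2' [B3' [B4' B5']]]].
  try fold D1 in A1. try fold D1 in A2. try fold D1 in A3. try fold D1 in A4. try fold D1 in A5. try fold D1 in B1'. try fold D1 in B2'. try fold D1 in B3'. try fold D1 in B4'. try fold D1 in B5'. try fold D2 in A1. try fold D2 in A2. try fold D2 in A3. try fold D2 in A4. try fold D2 in A5. try fold D2 in B1'. try fold D2 in B2'. try fold D2 in B3'. try fold D2 in B4'. try fold D2 in B5'. try fold C1 in A1. try fold C1 in A2. try fold C1 in A3. try fold C1 in A4. try fold C1 in A5. try fold C1 in B1'. try fold C1 in B2'. try fold C1 in B3'. try fold C1 in B4'. try fold C1 in B5'. try fold C2 in A1. try fold C2 in A2. try fold C2 in A3. try fold C2 in A4. try fold C2 in A5. try fold C2 in B1'. try fold C2 in B2'. try fold C2 in B3'. try fold C2 in B4'. try fold C2 in B5'. try fold B1 in A1. try fold B1 in A2. try fold B1 in A3. try fold B1 in A4. try fold B1 in A5. try fold B1 in B1'. try fold B1 in B2'. try fold B1 in B3'. try fold B1 in B4'. try fold B1 in B5'. try fold B2 in A1. try fold B2 in A2. try fold B2 in A3. try fold B2 in A4. try fold B2 in A5. try fold B2 in B1'. try fold B2 in B2'. try fold B2 in B3'. try fold B2 in B4'. try fold B2 in B5'. try fold K1 in A1. try fold K1 in A2. try fold K1 in A3. try fold K1 in A4. try fold K1 in A5. try fold K1 in B1'.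 try fold K1 in B2'. try fold K1 in B3'. try fold K1 in B4'. try fold K1 in B5'. try fold K2 in A1. try fold K2 in A2. try fold K2 in A3. try fold K2 in A4. try fold K2 in A5. try fold K2 in B1'. try fold K2 in B2'. try fold K2 in B3'. try fold K2 in B4'. try fold K2 in B5'.
  pose proof (abs_le_inv _ _ A1). pose proof (abs_le_inv _ _ B1').
  assert (Hn1 : IZR n <= 2 * C1) by lra.
  assert (Hn2 : - IZR n <= 2 * C1) by lra.
  assert (HnN : (Z.abs n <= N0)%Z).
  { destruct (archimed (2 * C1)) as [U _].
    assert (IZR n < IZR (up (2 * C1))) by lra. assert (IZR (- n) < IZR (up (2 * C1))) by (rewrite opp_IZR; lra).
    apply lt_IZR in H1. apply lt_IZR in H2. unfold N0. lia. }
  assert (Pn : powerRZ (IZR p) n <= PW) by (apply pow_le_Rpower; auto).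
  assert (Pmn : powerRZ (IZR p) (- n) <= PW) by (apply pow_le_Rpower; auto; rewrite opp_IZR; lra).
  pose proof (powerRZ_pos' p n Hp) as Pn0. pose proof (powerRZ_pos' p (- n) Hp) as Pmn0.
  assert (HB1 : 0 <= B1) by (unfold B1; apply Rmult_le_pos; [apply sqrt_pos| left; apply Rinv_0_lt_compat, uu_pos; auto]).
  assert (HB2 : 0 <= B2) by (unfold B2; apply Rmult_le_pos; [apply sqrt_pos| left; apply Rinv_0_lt_compat, uu_pos; auto]).
  assert (Hw1 : Rabs (fst w) <= W).
  { assert (Rabs X1 <= Rabs xi1 + B1).
    { replace X1 with (xi1 - (xi1 - X1)) by ring. eapply Rle_trans; [apply Rabs_triang|]. rewrite Rabs_Ropp. lra. }
    replace (fst w) with (- (xi1 - (powerRZ (IZR p) n * X1 + fst w)) + xi1 - powerRZ (IZR p) n * X1) by ring.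
    eapply Rle_trans; [apply Rabs_triang|]. eapply Rle_trans; [apply Rplus_le_compat_r, Rabs_triang|].
    rewrite !Rabs_Ropp, Rabs_mult, (Rabs_right (powerRZ _ _)) by lra.
    pose proof (Rabs_pos X1). pose proof (Rabs_pos xi2). pose proof (Rabs_pos xi1).
    assert (powerRZ (IZR p) n * Rabs X1 <= PW * (Rabs xi1 + B1)) by (apply Rmult_le_compat; lra).
    assert (0 <= PW * (Rabs xi2 + B2)) by (apply Rmult_le_pos; lra).
    unfold W. lra. }
  assert (Hw2 : Rabs (snd w) <= W).
  { assert (Rabs X2 <= Rabs xi2 + B2).
    { replace X2 with (xi2 - (xi2 - X2)) by ring. eapply Rle_trans; [apply Rabs_triang|]. rewrite Rabs_Ropp. lra. }
    replace (snd w) with (- (xi2 - (powerRZ (IZR p) (- n) * X2 + snd w)) + xi2 - powerRZ (IZR p) (- n) * X2) by ring.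
    eapply Rle_trans; [apply Rabs_triang|]. eapply Rle_trans; [apply Rplus_le_compat_r, Rabs_triang|].
    rewrite !Rabs_Ropp, Rabs_mult, (Rabs_right (powerRZ _ _)) by lra.
    pose proof (Rabs_pos X2). pose proof (Rabs_pos xi2). pose proof (Rabs_pos xi1).
    assert (powerRZ (IZR p) (- n) * Rabs X2 <= PW * (Rabs xi2 + B2)) by (apply Rmult_le_compat; lra).
    assert (0 <= PW * (Rabs xi1 + B1)) by (apply Rmult_le_pos; lra).
    unfold W. lra. }
  assert (Tw1 : in_pkZ p Q (fst w)).
  { apply (pk_mono p _ (Z.min K2 J2 - N0)); [auto|unfold Q; lia|].
    apply (tree_alg p K2 J2 N0 n R2 rho2); auto. }
  assert (Tw2 : in_pkZ p Q (snd w)).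
  { apply (pk_mono p _ (Z.min K1 J1 - N0)); [auto|unfold Q; lia|].
    apply (tree_alg p K1 J1 N0 (- n) R1 rho1); auto. lia. }
  destruct (int_bound p Q _ W Hp Tw1 Hw1) as [z1 [Ez1 Bz1]].
  destruct (int_bound p Q _ W Hp Tw2 Hw2) as [z2 [Ez2 Bz2]].
  fold Z0 in Bz1, Bz2.
  apply in_flat_map. exists n. split; [apply in_zr; lia|].
  apply in_flat_map. exists z1. split; [apply in_zr; lia|].
  apply in_map_iff. exists z2. split; [|apply in_zr; lia].
  rewrite <- Ez1, <- Ez2. replace (fst w, snd w) with w by (destruct w; auto).
  unfold w. rewrite P_minvP; auto.
Qed.

Lemma Kc_mono_W p W W' : prime p -> 0 <= W -> W <= W' ->
  / uu p * (2 * W + sqrt (2 * W)) <= / uu p * (2 * W' + sqrt (2 * W')).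
Proof.
  intros Hp H0 H. pose proof (uu_pos p Hp). apply Rmult_le_compat_l.
  - left; apply Rinv_0_lt_compat; auto.
  - assert (sqrt (2 * W) <= sqrt (2 * W')) by (apply sqrt_le_1_alt; lra). lra.
Qed.

Lemma Kc_scale p al be Y c1 c2 a b : prime p -> 0 < Y -> 0 < c1 -> 0 <= c2 ->
  0 <= al <= a * Y -> 0 <= be <= b ->
  Kc p al be (c1 * Y) (c2 * Y) <= Kc p a b c1 c2.
Proof.
  intros Hp HY Hc1 Hc2 Hal Hbe. unfold Kc. apply Kc_mono_W; auto.
  - apply Wc_nonneg. nra.
  - unfold Wc.
    assert (Ha2 : al ^ 2 <= (a * Y) ^ 2) by (apply sq_le_of_abs; rewrite Rabs_right; lra).
    assert (Hb2 : be ^ 2 <= b ^ 2) by (apply sq_le_of_abs; rewrite Rabs_right; lra).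
    pose proof (pow2_ge_0 (uu p)) as Hu.
    replace ((uu p ^ 2 * al ^ 2 + (uu p * (c2 * Y) * be) ^ 2) / (2 * (c1 * Y) ^ 2))
      with ((uu p ^ 2 * al ^ 2 + (uu p * (c2 * Y) * be) ^ 2) / Y ^ 2 / (2 * c1 ^ 2)) by (field; lra).
    unfold Rdiv at 1 3. apply Rmult_le_compat_r.
    + left. apply Rinv_0_lt_compat. nra.
    + apply (Rmult_le_reg_r (Y ^ 2)); [nra|]. unfold Rdiv. rewrite Rmult_assoc, Rinv_l, Rmult_1_r by nra.
      assert (uu p ^ 2 * al ^ 2 <= uu p ^ 2 * a ^ 2 * Y ^ 2) by (replace (uu p ^ 2 * a ^ 2 * Y ^ 2) with (uu p ^ 2 * (a * Y) ^ 2) by ring; apply Rmult_le_compat_l; auto).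
      assert ((uu p * (c2 * Y) * be) ^ 2 <= (uu p * c2 * b) ^ 2 * Y ^ 2).
      { replace ((uu p * (c2 * Y) * be) ^ 2) with ((uu p * c2 * Y) ^ 2 * be ^ 2) by ring.
        replace ((uu p * c2 * b) ^ 2 * Y ^ 2) with ((uu p * c2 * Y) ^ 2 * b ^ 2) by ring.
        apply Rmult_le_compat_l; auto. apply pow2_ge_0. }
      lra.
Qed.

Lemma YY_plus p a b : YY p (a + b) = YY p a * YY p b.
Proof. unfold YY. apply Rpower_plus. Qed.

Lemma YY_pow p k : prime p -> powerRZ (IZR p) k = YY p (IZR k).
Proof. intro Hp. unfold YY. apply powerRZ_Rpower. apply pR_pos; auto. Qed.

Lemma floor_approx p K X R : prime p ->
  let j := (up ((X - R) / powerRZ (IZR p) K) - 1)%Z in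
  Rabs (X - (R + powerRZ (IZR p) K * IZR j)) <= powerRZ (IZR p) K.
Proof.
  intros Hp j. pose proof (powerRZ_pos' p K Hp) as HK.
  set (y := (X - R) / powerRZ (IZR p) K).
  destruct (archimed y) as [U1 U2].
  assert (Hj : IZR j = IZR (up y) - 1) by (unfold j; rewrite minus_IZR; auto).
  replace (X - (R + powerRZ (IZR p) K * IZR j)) with (powerRZ (IZR p) K * (y - IZR j)) by (unfold y; field; lra).
  rewrite Rabs_mult, Rabs_right by lra. rewrite Rabs_right by lra.
  assert (y - IZR j <= 1) by lra. nra.
Qed.

Lemma cobounded_clause p N P : prime p -> monotone_norm2 N -> in_GL2_Zinvp p P ->
  exists x0 R0, in_HP p x0 /\ forall y, in_HP p y -> exists g, in_Gp p g /\ HP_dist p N y (actP p P g x0) <= R0.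
Proof.
  intros Hp HN HP.
  pose proof HP as HP'. destruct HP' as [_ [_ [_ [_ [Hdet _]]]]].
  assert (Z0 : in_Zinvp p 0) by (apply (Zinvp_IZR p 0); auto).
  exists (HPpt 0 0 0 0 0), (Kc p (5 * YY p (-1)) 20 (YY p (-3)) (YY p 3) * N 1 1).
  split.
  { unfold HPpt, in_HP, in_MF, in_Tree, MF_beta, H2_beta, Tree_beta; simpl. repeat split; auto; lra. }
  intros y Hy.
  destruct (in_HP_dec p y Hy) as [X1 [T [R1 [X2 [R2 [Ey [ZR1 ZR2]]]]]]].
  set (n := (up T - 1)%Z).
  assert (Hn : IZR n <= T < IZR n + 1).
  { unfold n. rewrite minus_IZR. destruct (archimed T). simpl. lra. }
  set (K2 := (n - 1)%Z). set (K1 := (- n - 1)%Z).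
  set (j1 := (up ((X1 - R2) / powerRZ (IZR p) K2) - 1)%Z).
  set (j2 := (up ((X2 - R1) / powerRZ (IZR p) K1) - 1)%Z).
  set (w1 := R2 + powerRZ (IZR p) K2 * IZR j1).
  set (w2 := R1 + powerRZ (IZR p) K1 * IZR j2).
  assert (Zw1 : in_Zinvp p w1) by (apply Zinvp_add; auto; apply Zinvp_mul; auto; [apply Zinvp_pow|apply Zinvp_IZR]; auto).
  assert (Zw2 : in_Zinvp p w2) by (apply Zinvp_add; auto; apply Zinvp_mul; auto; [apply Zinvp_pow|apply Zinvp_IZR]; auto).
  exists (mapply P (w1, w2), n). split.
  { destruct (P_Zinvp p P (w1, w2) Hp HP Zw1 Zw2). split; auto. }
  assert (Eg : actP p P (mapply P (w1, w2), n) (HPpt 0 0 0 0 0) = HPpt w1 (IZR n) w2 w2 w1).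
  { unfold actP. cbn [fst snd]. rewrite minvP_P by auto. cbn [fst snd].
    rewrite HPmap_HPpt by auto. unfold HPpt. f_equal; f_equal; f_equal; ring. }
  rewrite Eg, Ey.
  set (M1 := IZR n + 1). set (m2 := IZR n - 1).
  assert (HK1 : in_pkZ p K1 (R1 - w2)).
  { exists (- j2)%Z. unfold w2. rewrite opp_IZR. ring. }
  assert (HK2 : in_pkZ p K2 (R2 - w1)).
  { exists (- j1)%Z. unfold w1. rewrite opp_IZR. ring. }
  eapply Rle_trans.
  { apply pd_le. apply (HP_conn p N X1 T R1 X2 R2 w1 (IZR n) w2 w2 w1 M1 m2 K1 K2); auto;
    unfold M1, m2, K1, K2; try rewrite minus_IZR; try rewrite opp_IZR; simpl; lra. }
  assert (HN11 : 0 <= N 1 1) by (destruct HN as [[H0 _] _]; auto).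
  apply Rmult_le_compat_r; auto.
  assert (Hbe : 0 <= beta_c T M1 m2 (IZR n) <= 20).
  { unfold beta_c, M1, m2. split.
    - pose proof (Rabs_pos (IZR n + 1 - T)). pose proof (Rabs_pos (IZR n + 1 - (IZR n - 1))).
      pose proof (Rabs_pos (IZR n - (IZR n - 1))). lra.
    - rewrite (Rabs_right (IZR n + 1 - T)) by lra.
      replace (IZR n + 1 - (IZR n - 1)) with 2 by ring. replace (IZR n - (IZR n - 1)) with 1 by ring.
      rewrite !Rabs_right by lra. lra. }
  apply Rmax_lub.
  - replace (m2 - (M1 - m2)) with (-3 + IZR n) by (unfold m2, M1; ring).
    replace (M1 + (M1 - m2)) with (3 + IZR n) by (unfold m2, M1; ring).
    rewrite !YY_plus. apply Kc_scale; auto; try apply YY_pos.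
    + left; apply YY_pos.
    + split; [pose proof (Rabs_pos (w1 - X1)); lra|].
      rewrite Rabs_minus_sym.
      assert (E : powerRZ (IZR p) K2 = YY p (-1) * YY p (IZR n)).
      { rewrite YY_pow by auto. unfold K2. rewrite minus_IZR, <- YY_plus. f_equal. simpl. ring. }
      pose proof (floor_approx p K2 X1 R2 Hp) as F. cbv zeta in F. fold j1 in F.
      change (R2 + powerRZ (IZR p) K2 * IZR j1) with w1 in F. rewrite E in F. nra.
  - replace (- (M1 + (M1 - m2))) with (-3 + - IZR n) by (unfold m2, M1; ring).
    replace (- (m2 - (M1 - m2))) with (3 + - IZR n) by (unfold m2, M1; ring).
    rewrite !YY_plus. apply Kc_scale; auto; try apply YY_pos.
    + left; apply YY_pos.
    + split; [pose proof (Rabs_pos (w2 - X2)); lra|].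
      rewrite Rabs_minus_sym.
      assert (E : powerRZ (IZR p) K1 = YY p (-1) * YY p (- IZR n)).
      { rewrite YY_pow by auto. unfold K1. rewrite minus_IZR, opp_IZR, <- YY_plus. f_equal. simpl. ring. }
      pose proof (floor_approx p K1 X2 R1 Hp) as F. cbv zeta in F. fold j2 in F.
      change (R1 + powerRZ (IZR p) K1 * IZR j2) with w2 in F. rewrite E in F. nra.
Qed.

Theorem mainTheorem16 :
  forall (p : Z) (A : mat2),
    prime p ->
    in_GL2_Zinvp p A ->
    conj_to_diag_p p A ->
    forall N : R -> R -> R, monotone_norm2 N ->
    exists act : Gp_elt -> HP_pt -> HP_pt,
      geometric_action (in_Gp p) (Gp_mul A) Gp_one (in_HP p) (HP_dist p N) act.
Proof.
  intros p A Hp HA [P [HP EA]] N HN. exists (actP p P).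
  destruct (clauses_1234 p P A N Hp HP EA (proj1 HN)) as [C1 [C2 [C3 C4]]].
  unfold geometric_action. split; [exact C1|]. split; [exact C2|]. split; [exact C3|].
  split; [exact C4|]. split.
  - intros x r Hx. apply proper_clause; auto.
  - apply cobounded_clause; auto.
Qed.
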